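(* Let $f,g\in\mathrm{Diffeo}^-(\mathbb{R})$ with $f(0)=g(0)=0$ and $f\circ f=g\circ g$, and suppose $(T_0f)\circ(T_0f)=X$. Suppose $0$ is a boundary point of $\mathrm{fix}(f\circ f)=\{x\in\mathbb{R}: f(f(x))=x\}$. Then there exists $h\in\mathrm{Diffeo}^+(\mathbb{R})$ with $f=h^{-1}\circ g\circ h$ if and only if $T_0f=T_0g$.
   Context: $\mathrm{Diffeo}(\mathbb{R})$ is the group of $C^\infty$ diffeomorphisms of $\mathbb{R}$ under composition; $\mathrm{Diffeo}^+(\mathbb{R})$ (resp. $\mathrm{Diffeo}^-(\mathbb{R})$) is the set of orientation-preserving (resp. orientation-reversing) diffeomorphisms. For a diffeomorphism $\phi$ with $\phi(0)=0$, $T_0\phi=\phi'(0)X+\frac{\phi''(0)}{2}X^2+\cdots$ is its Taylor series at $0$, viewed as a formal power series under formal composition; $X$ denotes the identity series. *)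

(* Defs.v *)
From Stdlib Require Import Reals Lra Arith.
From Coquelicot Require Import Coquelicot.
Open Scope R_scope.

Definition smooth (f : R -> R) : Prop := forall (n : nat) (x : R), ex_derive_n f n x.

Definition is_diffeo_with (f finv : R -> R) : Prop :=
  smooth f /\ smooth finv /\ (forall x, finv (f x) = x) /\ (forall x, f (finv x) = x).

Definition is_diffeo (f : R -> R) : Prop := exists finv, is_diffeo_with f finv.

Definition diffeo_plus (f : R -> R) : Prop :=
  is_diffeo f /\ (forall x y, x < y -> f x < f y).
Definition diffeo_minus (f : R -> R) : Prop :=
  is_diffeo f /\ (forall x y, x < y -> f y < f x).

Definition fps := nat -> R.

Definition fps_one : fps := fun n => if Nat.eqb n 0 then 1 else 0.
Definition fps_X : fps := fun n => if Nat.eqb n 1 then 1 else 0.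

Definition fps_mul (a b : fps) : fps :=
  fun n => sum_f_R0 (fun k => a k * b (n - k)%nat) n.

Fixpoint fps_pow (a : fps) (k : nat) : fps :=
  match k with
  | O => fps_one
  | S k' => fps_mul a (fps_pow a k')
  end.

(* formal composition a o b, meaningful when b 0 = 0 (then (b^k)_n = 0 for k > n) *)
Definition fps_comp (a b : fps) : fps :=
  fun n => sum_f_R0 (fun k => a k * fps_pow b k n) n.

Definition taylor0 (f : R -> R) : fps :=
  fun n => Derive_n f n 0 / INR (fact n).

Definition boundary_point (S : R -> Prop) (x : R) : Prop :=
  (forall eps, 0 < eps -> exists y, Rabs (y - x) < eps /\ S y) /\
  (forall eps, 0 < eps -> exists y, Rabs (y - x) < eps /\ ~ S y).

(* Main.v *)
Require Import Defs.
From Stdlib Require Import Reals Lra Lia FunctionalExtensionality.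
From Coquelicot Require Import Coquelicot.
Open Scope R_scope.

Definition Cn (n : nat) (p : R -> R) : Prop :=
  forall k, (k <= n)%nat -> forall x, ex_derive_n p k x.

Lemma Derive_n_S (p : R -> R) k x : Derive_n p (S k) x = Derive_n (Derive p) k x.
Proof.
  replace (S k) with (k + 1)%nat by lia. rewrite <- (Derive_n_comp p k 1). reflexivity.
Qed.

Lemma Cn_ext n u v : Cn n u -> (forall x, u x = v x) -> Cn n v.
Proof. intros H E k Hk x. apply (ex_derive_n_ext u v); auto. Qed.

Lemma Cn_le n m u : (m <= n)%nat -> Cn n u -> Cn m u.
Proof. intros Hm H k Hk x. apply H. lia. Qed.

Lemma Cn_0 u : Cn 0 u.
Proof. intros k Hk x. destruct k. exact I. lia. Qed.

Lemma Cn_S n u : Cn (S n) u <-> (forall x, ex_derive u x) /\ Cn n (Derive u).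
Proof.
  split.
  - intros H. split.
    + intros x. exact (H 1%nat ltac:(lia) x).
    + intros k Hk x. destruct k. exact I.
      assert (H2 := H (S (S k)) ltac:(lia) x). simpl in H2.
      simpl. apply (ex_derive_ext (Derive_n u (S k))).
      intros t. apply Derive_n_S. exact H2.
  - intros [H1 H2] k Hk x. destruct k. exact I. destruct k. exact (H1 x).
    simpl. apply (ex_derive_ext (Derive_n (Derive u) k)).
    intros t. symmetry. apply Derive_n_S.
    exact (H2 (S k) ltac:(lia) x).
Qed.

Lemma smooth_Cn u : smooth u <-> forall n, Cn n u.
Proof.
  split. intros H n k Hk x. apply H. intros H n x. apply (H n n (le_n n)).
Qed.

Lemma Cn_const n c : Cn n (fun _ => c).
Proof.
  induction n. apply Cn_0. apply Cn_S. split. intros; apply ex_derive_const.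
  apply (Cn_ext n (fun _ => 0)). 2: intros; symmetry; apply Derive_const.
  clear IHn. induction n. apply Cn_0. apply Cn_S. split. intros; apply ex_derive_const.
  apply (Cn_ext n (fun _ => 0)); auto. intros; symmetry; apply Derive_const.
Qed.

Lemma Cn_id n : Cn n (fun x => x).
Proof.
  destruct n. apply Cn_0. apply Cn_S. split. intros; apply ex_derive_id.
  apply (Cn_ext n (fun _ => 1)). apply Cn_const. intros; symmetry; apply Derive_id.
Qed.

Lemma Cn_plus n : forall u v, Cn n u -> Cn n v -> Cn n (fun x => u x + v x).
Proof.
  induction n. intros; apply Cn_0.
  intros u v Hu Hv. apply Cn_S in Hu as [Hu1 Hu2]. apply Cn_S in Hv as [Hv1 Hv2].
  apply Cn_S. split. intros x. apply (ex_derive_plus u v x); auto.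
  apply (Cn_ext n (fun x => Derive u x + Derive v x)). auto.
  intros x. symmetry. apply Derive_plus; auto.
Qed.

Lemma Cn_mult n : forall u v, Cn n u -> Cn n v -> Cn n (fun x => u x * v x).
Proof.
  induction n. intros; apply Cn_0.
  intros u v Hu Hv. assert (Hu' := Cn_le (S n) n u ltac:(lia) Hu).
  assert (Hv' := Cn_le (S n) n v ltac:(lia) Hv).
  apply Cn_S in Hu as [Hu1 Hu2]. apply Cn_S in Hv as [Hv1 Hv2].
  apply Cn_S. split. intros x. apply ex_derive_mult; auto.
  apply (Cn_ext n (fun x => Derive u x * v x + u x * Derive v x)).
  apply Cn_plus; apply IHn; auto.
  intros x. symmetry. apply Derive_mult; auto.
Qed.

Lemma Cn_comp n : forall u v, Cn n u -> Cn n v -> Cn n (fun x => u (v x)).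
Proof.
  induction n. intros; apply Cn_0.
  intros u v Hu Hv. assert (Hv' := Cn_le (S n) n v ltac:(lia) Hv).
  apply Cn_S in Hu as [Hu1 Hu2]. apply Cn_S in Hv as [Hv1 Hv2].
  apply Cn_S. split. intros x. apply (ex_derive_comp u v x); auto.
  apply (Cn_ext n (fun x => Derive v x * Derive u (v x))).
  apply Cn_mult; auto.
  intros x. symmetry. apply Derive_comp; auto.
Qed.

Lemma smooth_comp u v : smooth u -> smooth v -> smooth (fun x => u (v x)).
Proof. rewrite !smooth_Cn. intros; apply Cn_comp; auto. Qed.
Lemma smooth_plus u v : smooth u -> smooth v -> smooth (fun x => u x + v x).
Proof. rewrite !smooth_Cn. intros; apply Cn_plus; auto. Qed.
Lemma smooth_mult u v : smooth u -> smooth v -> smooth (fun x => u x * v x).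
Proof. rewrite !smooth_Cn. intros; apply Cn_mult; auto. Qed.
Lemma smooth_const c : smooth (fun _ => c).
Proof. apply smooth_Cn. intros; apply Cn_const. Qed.
Lemma smooth_id : smooth (fun x => x).
Proof. apply smooth_Cn. intros; apply Cn_id. Qed.
Lemma smooth_ext u v : smooth u -> (forall x, u x = v x) -> smooth v.
Proof. rewrite !smooth_Cn. intros H E n. apply (Cn_ext n u); auto. Qed.
Lemma smooth_opp u : smooth u -> smooth (fun x => - u x).
Proof. intros H. apply (smooth_ext (fun x => (-1) * u x)).
  apply smooth_mult; auto using smooth_const. intros; ring. Qed.
Lemma smooth_Derive u : smooth u -> smooth (Derive u).
Proof. rewrite !smooth_Cn. intros H n. apply (Cn_S n u). auto. Qed.
Lemma smooth_ex_derive u x : smooth u -> ex_derive u x.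
Proof. intros H. exact (H 1%nat x). Qed.
Lemma smooth_continuity u x : smooth u -> continuity_pt u x.
Proof. intros H. apply continuity_pt_filterlim.
  apply (ex_derive_continuous (K:=R_AbsRing) (V:=R_NormedModule)).
  apply smooth_ex_derive; auto. Qed.

Definition glue (u v : R -> R) (x : R) : R := if Rle_dec 0 x then v x else u x.

Lemma glue_pos u v x : 0 <= x -> glue u v x = v x.
Proof. unfold glue; destruct (Rle_dec 0 x); lra. Qed.
Lemma glue_neg u v x : x < 0 -> glue u v x = u x.
Proof. unfold glue; destruct (Rle_dec 0 x); lra. Qed.

Lemma loc_pos u v x : 0 < x -> locally x (fun t => glue u v t = v t).
Proof. intros H. apply (filter_imp (fun t : R => 0 < t)).
  intros; apply glue_pos; lra. apply open_gt; auto. Qed.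
Lemma loc_neg u v x : x < 0 -> locally x (fun t => glue u v t = u t).
Proof. intros H. apply (filter_imp (fun t : R => t < 0)).
  intros; apply glue_neg; lra. apply open_lt; auto. Qed.

Lemma glue_is_derive u v l : is_derive u 0 l -> is_derive v 0 l -> u 0 = v 0 ->
  is_derive (glue u v) 0 l.
Proof.
  rewrite !is_derive_Reals. intros Hu Hv E eps Heps.
  destruct (Hu eps Heps) as [d1 H1]. destruct (Hv eps Heps) as [d2 H2].
  assert (Hd : 0 < Rmin d1 d2) by (apply Rmin_pos; apply cond_pos).
  exists (mkposreal _ Hd). intros h Hh Hlt. simpl in Hlt.
  rewrite (glue_pos u v 0) by lra.
  destruct (Rle_dec 0 h).
  - rewrite glue_pos by lra. replace (0 + h) with h in * by ring.
    specialize (H2 h Hh ltac:(apply Rlt_le_trans with (1:=Hlt); apply Rmin_r)).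
    replace (0 + h) with h in H2 by ring. auto.
  - rewrite glue_neg by lra. rewrite <- E.
    specialize (H1 h Hh ltac:(apply Rlt_le_trans with (1:=Hlt); apply Rmin_l)).
    replace (0 + h) with h in * by ring. auto.
Qed.

Lemma glue_smooth u v : smooth u -> smooth v ->
  (forall n, Derive_n u n 0 = Derive_n v n 0) -> smooth (glue u v).
Proof.
  intros Su Sv E.
  assert (key : forall n x, Derive_n (glue u v) n x = glue (Derive_n u n) (Derive_n v n) x /\
                            ex_derive (Derive_n (glue u v) n) x).
  { induction n as [|n IH]; intros x.
    - assert (Hd : ex_derive (glue u v) x).
      { destruct (Rlt_le_dec 0 x) as [Hx|Hx]. 
        + apply (ex_derive_ext_loc v). 
          apply (filter_imp (fun t => glue u v t = v t)). intros; auto. 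
          apply (filter_imp (fun t => glue u v t = v t)). intros; symmetry; auto. apply loc_pos; auto.
          apply smooth_ex_derive; auto.
        + destruct (Rle_lt_or_eq_dec _ _ Hx) as [Hx'|Hx'].
          * apply (ex_derive_ext_loc u).
            apply (filter_imp (fun t => glue u v t = u t)). intros; symmetry; auto. apply loc_neg; auto.
            apply smooth_ex_derive; auto.
          * subst x. exists (Derive v 0). apply glue_is_derive.
            replace (Derive v 0) with (Derive u 0). apply Derive_correct, smooth_ex_derive; auto.
            exact (E 1%nat). apply Derive_correct, smooth_ex_derive; auto. exact (E 0%nat). }
      split. reflexivity. exact Hd.
    - assert (Hext : forall t, Derive_n (glue u v) n t = glue (Derive_n u n) (Derive_n v n) t)
        by (intros; apply IH).
      assert (SDu : smooth (Derive_n u n)). { clear -Su. induction n. auto.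
        apply (smooth_ext (Derive (Derive_n u n))). apply smooth_Derive; auto. intros; reflexivity. }
      assert (SDv : smooth (Derive_n v n)). { clear -Sv. induction n. auto.
        apply (smooth_ext (Derive (Derive_n v n))). apply smooth_Derive; auto. intros; reflexivity. }
      assert (Hd : forall y, is_derive (glue (Derive_n u n) (Derive_n v n)) y
                      (glue (Derive_n u (S n)) (Derive_n v (S n)) y)).
      { intros y. destruct (Rlt_le_dec 0 y) as [Hy|Hy].
        + rewrite glue_pos by lra. apply (is_derive_ext_loc (Derive_n v n)).
          apply (filter_imp (fun t => glue (Derive_n u n) (Derive_n v n) t = Derive_n v n t)).
          intros; symmetry; auto. apply loc_pos; auto.
          apply Derive_correct, smooth_ex_derive; auto.
        + destruct (Rle_lt_or_eq_dec _ _ Hy) as [Hy'|Hy'].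
          * rewrite glue_neg by lra. apply (is_derive_ext_loc (Derive_n u n)).
            apply (filter_imp (fun t => glue (Derive_n u n) (Derive_n v n) t = Derive_n u n t)).
            intros; symmetry; auto. apply loc_neg; auto.
            apply Derive_correct, smooth_ex_derive; auto.
          * subst y. rewrite glue_pos by lra. apply glue_is_derive.
            rewrite <- (E (S n)). apply Derive_correct, smooth_ex_derive; auto.
            apply Derive_correct, smooth_ex_derive; auto. apply (E n). }
      assert (Hd2 : forall y, is_derive (Derive_n (glue u v) n) y
                      (glue (Derive_n u (S n)) (Derive_n v (S n)) y)).
      { intros y. apply (is_derive_ext (glue (Derive_n u n) (Derive_n v n))).
        intros; symmetry; auto. auto. }
      assert (HS : forall t, Derive_n (glue u v) (S n) t = glue (Derive_n u (S n)) (Derive_n v (S n)) t).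
      { intros t. simpl Derive_n at 1. apply is_derive_unique. auto. }
      split. apply HS.
      assert (SDu' : smooth (Derive_n u (S n))). { apply (smooth_ext (Derive (Derive_n u n))). apply smooth_Derive; auto. intros; reflexivity. }
      assert (SDv' : smooth (Derive_n v (S n))). { apply (smooth_ext (Derive (Derive_n v n))). apply smooth_Derive; auto. intros; reflexivity. }
      apply (ex_derive_ext (glue (Derive_n u (S n)) (Derive_n v (S n)))).
      intros; symmetry; auto.
      destruct (Rlt_le_dec 0 x) as [Hx|Hx].
      + apply (ex_derive_ext_loc (Derive_n v (S n))).
        apply (filter_imp (fun t => glue (Derive_n u (S n)) (Derive_n v (S n)) t = Derive_n v (S n) t)).
        intros; symmetry; auto. apply loc_pos; auto. apply smooth_ex_derive; auto.
      + destruct (Rle_lt_or_eq_dec _ _ Hx) as [Hx'|Hx'].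
        * apply (ex_derive_ext_loc (Derive_n u (S n))).
          apply (filter_imp (fun t => glue (Derive_n u (S n)) (Derive_n v (S n)) t = Derive_n u (S n) t)).
          intros; symmetry; auto. apply loc_neg; auto. apply smooth_ex_derive; auto.
        * subst x. exists (Derive (Derive_n v (S n)) 0). apply glue_is_derive.
          replace (Derive (Derive_n v (S n)) 0) with (Derive (Derive_n u (S n)) 0).
          apply Derive_correct, smooth_ex_derive; auto. exact (E (S (S n))).
          apply Derive_correct, smooth_ex_derive; auto. exact (E (S n)). }
  intros n x. destruct n. exact I. simpl. apply key.
Qed.

Definition ev (c : fps) (N : nat) (x : R) : R := sum_f_R0 (fun k => c k * x ^ k) N.

Lemma sum_single (u : nat -> R) n j : (j <= n)%nat ->
  (forall i, (i <= n)%nat -> i <> j -> u i = 0) -> sum_f_R0 u n = u j.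
Proof.
  induction n; intros Hj H.
  - simpl. assert (j = 0%nat) by lia. subst; auto.
  - simpl. destruct (Nat.eq_dec j (S n)).
    + subst. rewrite (sum_eq _ (fun _ => 0)). rewrite sum_cte. ring.
      intros i Hi. apply H; lia.
    + rewrite IHn by (try lia; intros; apply H; lia). rewrite (H (S n)); try lia. ring.
Qed.

Lemma sum_zero (u : nat -> R) n : (forall i, (i <= n)%nat -> u i = 0) -> sum_f_R0 u n = 0.
Proof. intros H. rewrite (sum_eq _ (fun _ => 0)). rewrite sum_cte. ring. auto. Qed.

Lemma ev_one N x : ev fps_one N x = 1.
Proof. unfold ev. rewrite (sum_single _ N 0). unfold fps_one; simpl; ring. lia.
  intros i _ Hi. unfold fps_one. destruct i. lia. simpl; ring. Qed.

Lemma ev_X N x : (1 <= N)%nat -> ev fps_X N x = x.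
Proof. intros HN. unfold ev. rewrite (sum_single _ N 1). unfold fps_X; simpl; ring. lia.
  intros i _ Hi. unfold fps_X. destruct (Nat.eqb_spec i 1). lia. ring. Qed.

Lemma ev_0 c N : ev c N 0 = c 0%nat.
Proof. unfold ev. rewrite (sum_single _ N 0). simpl; ring. lia.
  intros i _ Hi. destruct i. lia. simpl; ring. Qed.

Lemma ev_S c N x : ev c (S N) x = ev c N x + c (S N) * x ^ (S N).
Proof. reflexivity. Qed.

Lemma ev_minus c d N x : ev c N x - ev d N x = ev (fun k => c k - d k) N x.
Proof. unfold ev. rewrite <- minus_sum. apply sum_eq. intros; ring. Qed.

Lemma ev_eq c d N x : (forall k, (k <= N)%nat -> c k = d k) -> ev c N x = ev d N x.
Proof. intros H. unfold ev. apply sum_eq. intros i Hi. rewrite H; auto. Qed.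

Lemma fps_pow_low b : b 0%nat = 0 -> forall k n, (n < k)%nat -> fps_pow b k n = 0.
Proof.
  intros Hb. induction k; intros n Hn. lia.
  simpl. unfold fps_mul. apply sum_zero. intros i Hi. destruct i.
  rewrite Hb; ring. rewrite IHk. ring. lia.
Qed.

Lemma fps_pow_X k n : fps_pow fps_X k n = if Nat.eqb k n then 1 else 0.
Proof.
  revert n. induction k; intros n.
  - simpl. unfold fps_one. destruct n; reflexivity.
  - simpl fps_pow. unfold fps_mul. destruct n.
    + simpl. unfold fps_X. simpl. ring.
    + rewrite (sum_single _ (S n) 1). unfold fps_X. simpl Nat.eqb at 1.
      rewrite IHk. replace (S n - 1)%nat with n by lia. simpl. ring. lia.
      intros i _ Hi. unfold fps_X. destruct (Nat.eqb_spec i 1). lia. ring.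
Qed.

Lemma comp_X_right a : fps_comp a fps_X = a.
Proof.
  apply functional_extensionality. intros n. unfold fps_comp.
  rewrite (sum_single _ n n). rewrite fps_pow_X, Nat.eqb_refl. ring. lia.
  intros i _ Hi. rewrite fps_pow_X. destruct (Nat.eqb_spec i n). lia. ring.
Qed.

Lemma comp_X_left b : b 0%nat = 0 -> fps_comp fps_X b = b.
Proof.
  intros Hb. apply functional_extensionality. intros n. unfold fps_comp. destruct n.
  - simpl. unfold fps_X. simpl. rewrite Hb. ring.
  - rewrite (sum_single _ (S n) 1). unfold fps_X. simpl Nat.eqb.
    simpl fps_pow. unfold fps_mul. rewrite (sum_single _ (S n) (S n)).
    replace (S n - S n)%nat with 0%nat by lia. unfold fps_one. simpl. ring.
    all: try lia.
    intros i Hi0 Hi. unfold fps_one. destruct (Nat.eqb_spec (S n - i) 0). lia. ring.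
    intros i _ Hi. unfold fps_X. destruct (Nat.eqb_spec i 1). lia. ring.
Qed.

Lemma pow_abs_le1 x n m : Rabs x <= 1 -> (n <= m)%nat -> Rabs x ^ m <= Rabs x ^ n.
Proof. intros Hx Hnm. induction Hnm. lra. simpl.
  apply Rle_trans with (2:=IHHnm). rewrite <- (Rmult_1_l (Rabs x ^ m)) at 2.
  apply Rmult_le_compat_r. apply pow_le, Rabs_pos. auto. Qed.

Lemma ev_bound c N : exists M, forall x, Rabs x <= 1 -> Rabs (ev c N x) <= M.
Proof.
  exists (sum_f_R0 (fun k => Rabs (c k)) N). intros x Hx. unfold ev.
  eapply Rle_trans. apply sum_f_R0_triangle. apply sum_Rle. intros k _.
  rewrite Rabs_mult, <- RPow_abs. rewrite <- (Rmult_1_r (Rabs (c k))) at 2.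
  apply Rmult_le_compat_l. apply Rabs_pos. rewrite <- (pow1 k). apply pow_incr. split. apply Rabs_pos. auto.
Qed.

Lemma mul_approx u v N : exists K, forall x, Rabs x <= 1 ->
  Rabs (ev u N x * ev v N x - ev (fps_mul u v) N x) <= K * Rabs x ^ (S N).
Proof.
  destruct N.
  - exists 0. intros x _. unfold ev, fps_mul. simpl.
    match goal with |- Rabs ?a <= _ => replace a with 0 by ring end.
    rewrite Rabs_R0. lra.
  - exists (sum_f_R0 (fun k => sum_f_R0 (fun l => Rabs (u (S (l + k))) * Rabs (v (S N - l)%nat)) (Init.Nat.pred (S N - k))) (Init.Nat.pred (S N))).
    intros x Hx. unfold ev. rewrite cauchy_finite by lia.
    match goal with |- Rabs (?A + ?B - ?C) <= _ => replace (A + B - C) with B end.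
    2:{ unfold fps_mul. match goal with |- _ = ?A + _ - ?C => replace A with C; [ring|] end.
        apply sum_eq. intros i Hi. rewrite Rmult_comm, scal_sum. apply sum_eq. intros j Hj.
        replace (x ^ i) with (x ^ j * x ^ (i - j)) by (rewrite <- pow_add; f_equal; lia). ring. }
    eapply Rle_trans. apply sum_f_R0_triangle. rewrite Rmult_comm, scal_sum. apply sum_Rle. intros k Hk.
    eapply Rle_trans. apply sum_f_R0_triangle. rewrite Rmult_comm, scal_sum. apply sum_Rle. intros l Hl.
    replace (u (S (l + k)) * x ^ S (l + k) * (v (S N - l)%nat * x ^ (S N - l)))
      with (u (S (l + k)) * v (S N - l)%nat * x ^ (S (l + k) + (S N - l))) by (rewrite pow_add; ring).
    rewrite !Rabs_mult, <- RPow_abs. apply Rmult_le_compat_l.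
    apply Rmult_le_pos; apply Rabs_pos. apply pow_abs_le1; auto. lia.
Qed.

Lemma pow_approx u N : forall k, exists K, forall x, Rabs x <= 1 ->
  Rabs ((ev u N x) ^ k - ev (fps_pow u k) N x) <= K * Rabs x ^ (S N).
Proof.
  induction k.
  - exists 0. intros x _. simpl. rewrite ev_one. replace (1-1) with 0 by ring. rewrite Rabs_R0. lra.
  - destruct IHk as [K HK]. destruct (ev_bound u N) as [M HM]. destruct (mul_approx u (fps_pow u k) N) as [K2 HK2].
    exists (M * K + K2). intros x Hx. simpl fps_pow. simpl pow.
    replace (ev u N x * ev u N x ^ k - ev (fps_mul u (fps_pow u k)) N x) with
      (ev u N x * (ev u N x ^ k - ev (fps_pow u k) N x) + (ev u N x * ev (fps_pow u k) N x - ev (fps_mul u (fps_pow u k)) N x)) by ring.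
    eapply Rle_trans. apply Rabs_triang. rewrite Rmult_plus_distr_r. apply Rplus_le_compat; auto.
    rewrite Rabs_mult, Rmult_assoc. apply Rmult_le_compat; auto using Rabs_pos.
Qed.

Lemma sum_approx (F G : nat -> R -> R) (e : R -> R) N :
  (forall k, (k <= N)%nat -> exists K, forall x, Rabs x <= 1 -> Rabs (F k x - G k x) <= K * e x) ->
  exists K, forall x, Rabs x <= 1 -> Rabs (sum_f_R0 (fun k => F k x) N - sum_f_R0 (fun k => G k x) N) <= K * e x.
Proof.
  induction N; intros H.
  - destruct (H 0%nat (le_n _)) as [K HK]. exists K. intros. simpl. auto.
  - destruct IHN as [K1 H1]. intros; apply H; lia. destruct (H (S N) (le_n _)) as [K2 H2].
    exists (K1 + K2). intros x Hx. simpl.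
    replace (sum_f_R0 (fun k : nat => F k x) N + F (S N) x - (sum_f_R0 (fun k : nat => G k x) N + G (S N) x))
      with ((sum_f_R0 (fun k : nat => F k x) N - sum_f_R0 (fun k : nat => G k x) N) + (F (S N) x - G (S N) x)) by ring.
    eapply Rle_trans. apply Rabs_triang. rewrite Rmult_plus_distr_r. apply Rplus_le_compat; auto.
Qed.

Lemma sum_swap (a : nat -> nat -> R) M N :
  sum_f_R0 (fun k => sum_f_R0 (fun n => a k n) N) M = sum_f_R0 (fun n => sum_f_R0 (fun k => a k n) M) N.
Proof.
  induction M. reflexivity. simpl. rewrite IHM. rewrite <- sum_plus. reflexivity.
Qed.

Lemma comp_approx A B N : B 0%nat = 0 -> exists K, forall x, Rabs x <= 1 ->
  Rabs (ev A N (ev B N x) - ev (fps_comp A B) N x) <= K * Rabs x ^ (S N).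
Proof.
  intros HB.
  destruct (sum_approx (fun k x => A k * (ev B N x) ^ k) (fun k x => A k * ev (fps_pow B k) N x) (fun x => Rabs x ^ S N) N) as [K HK].
  { intros k _. destruct (pow_approx B N k) as [K HK]. exists (Rabs (A k) * K). intros x Hx.
    rewrite <- Rmult_minus_distr_l, Rabs_mult, Rmult_assoc. apply Rmult_le_compat_l. apply Rabs_pos. auto. }
  exists K. intros x Hx. specialize (HK x Hx).
  replace (ev (fps_comp A B) N x) with (sum_f_R0 (fun k => A k * ev (fps_pow B k) N x) N). exact HK.
  unfold ev. transitivity (sum_f_R0 (fun k => sum_f_R0 (fun n => A k * fps_pow B k n * x ^ n) N) N).
  apply sum_eq. intros i _. rewrite scal_sum. apply sum_eq. intros; ring.
  rewrite sum_swap. apply sum_eq. intros n Hn. unfold fps_comp.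
  rewrite <- (Rmult_comm (x ^ n)), scal_sum.
  destruct (Nat.eq_dec n N). subst. apply sum_eq; intros; ring.
  rewrite (tech2 _ n N) by lia. rewrite (sum_zero (fun i => A (S n + i)%nat * fps_pow B (S n + i) n * x ^ n)).
  rewrite Rplus_0_r. apply sum_eq; intros; ring.
  intros i _. rewrite fps_pow_low; auto. ring. lia.
Qed.

Lemma smooth_Derive_n u n : smooth u -> smooth (Derive_n u n).
Proof. intros Su. induction n. auto.
  apply (smooth_ext (Derive (Derive_n u n))). apply smooth_Derive; auto. intros; reflexivity. Qed.

Lemma taylor_pos phi N : smooth phi -> exists K, forall y, 0 < y <= 1 ->
  Rabs (phi y - ev (taylor0 phi) N y) <= K * y ^ (S N).
Proof.
  intros Sp. set (D := Derive_n phi (S N)).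
  assert (SD : smooth D) by (apply smooth_Derive_n; auto).
  destruct (continuity_ab_maj (fun t => Rabs (D t)) 0 1) as [Mx [HM _]]. lra.
  { intros c _. apply (continuity_pt_comp D Rabs). apply smooth_continuity; auto. apply Rcontinuity_abs. }
  exists (Rabs (D Mx) / INR (Factorial.fact (S N))). intros y Hy.
  destruct (Taylor_Lagrange phi N 0 y ltac:(lra)) as [z [Hz E]].
  { intros t _ k _. apply Sp. }
  rewrite E. unfold ev, taylor0.
  match goal with |- Rabs (?A + ?B - ?C) <= _ => replace (A + B - C) with B end.
  2:{ match goal with |- _ = ?A + _ - ?C => replace A with C; [ring|] end.
      apply sum_eq. intros i _. replace (y - 0) with y by ring. field. apply INR_fact_neq_0. }
  replace (y - 0) with y by ring. fold D.
  rewrite Rabs_mult. rewrite (Rabs_right (y ^ S N / _)).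
  2:{ apply Rle_ge. unfold Rdiv. apply Rmult_le_pos. apply pow_le; lra. apply Rlt_le, Rinv_0_lt_compat, INR_fact_lt_0. }
  unfold Rdiv.
  replace (y ^ S N * / INR (Factorial.fact (S N)) * Rabs (D z)) with (Rabs (D z) * / INR (Factorial.fact (S N)) * y ^ S N) by ring.
  apply Rmult_le_compat_r. apply pow_le; lra. apply Rmult_le_compat_r.
  apply Rlt_le, Rinv_0_lt_compat, INR_fact_lt_0. apply HM. lra.
Qed.

Lemma taylor0_neg phi k : smooth phi ->
  taylor0 (fun t => phi (-1 * t)) k = (-1) ^ k * taylor0 phi k.
Proof.
  intros Sp. unfold taylor0. rewrite Derive_n_comp_scal. replace (-1 * 0) with 0 by ring.
  unfold Rdiv; ring. apply filter_forall. intros; apply Sp.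
Qed.

Lemma taylor phi N : smooth phi -> exists K, forall y, Rabs y <= 1 ->
  Rabs (phi y - ev (taylor0 phi) N y) <= K * Rabs y ^ (S N).
Proof.
  intros Sp. destruct (taylor_pos phi N Sp) as [K1 H1].
  assert (Sq : smooth (fun t => phi (-1 * t))).
  { apply smooth_comp; auto. apply (smooth_ext (fun t => (-1) * t)). apply smooth_mult. apply smooth_const. apply smooth_id. intros; ring. }
  destruct (taylor_pos _ N Sq) as [K2 H2].
  exists (Rmax K1 K2). intros y Hy.
  destruct (Rtotal_order y 0) as [Hn|[H0|Hp]].
  - specialize (H2 (-y) ltac:(split; [lra| rewrite Rabs_left in Hy by lra; lra])).
    replace (phi (-1 * - y)) with (phi y) in H2 by (f_equal; ring).
    replace (ev (taylor0 (fun t : R => phi (-1 * t))) N (- y)) with (ev (taylor0 phi) N y) in H2.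
    rewrite (Rabs_left y) by lra. eapply Rle_trans. apply H2. apply Rmult_le_compat_r. apply pow_le; lra. apply Rmax_r.
    unfold ev. apply sum_eq. intros i _. rewrite taylor0_neg by auto.
    replace (-y) with ((-1) * y) by ring. rewrite Rpow_mult_distr.
    replace ((-1) ^ i * taylor0 phi i * ((-1) ^ i * y ^ i)) with (((-1) ^ i * (-1) ^ i) * (taylor0 phi i * y ^ i)) by ring.
    rewrite <- Rpow_mult_distr. replace (-1 * -1) with 1 by ring. rewrite pow1. ring.
  - subst y. rewrite ev_0. unfold taylor0. simpl. replace (phi 0 - phi 0 / 1) with 0 by field.
    rewrite Rabs_R0. simpl. rewrite Rmult_0_l, Rmult_0_r. lra.
  - rewrite (Rabs_right y) by lra. eapply Rle_trans. apply H1. rewrite Rabs_right in Hy; lra.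
    apply Rmult_le_compat_r. apply pow_le; lra. apply Rmax_l.
Qed.

Lemma ev_shift c N x : ev c (S N) x = c 0%nat + x * ev (fun k => c (S k)) N x.
Proof.
  induction N.
  - unfold ev; simpl; ring.
  - rewrite ev_S, IHN. rewrite (ev_S (fun k => c (S k))). simpl. ring.
Qed.

Lemma zero_of_small a L rho : 0 < rho -> (forall x, 0 < x < rho -> Rabs a <= L * x) -> a = 0.
Proof.
  intros Hr H. destruct (Req_dec a 0) as [|Ha]; auto. exfalso.
  assert (Hpa : 0 < Rabs a) by (apply Rabs_pos_lt; auto).
  set (L' := Rabs L + 1).
  set (x := Rmin (rho / 2) (Rabs a / (2 * L'))).
  assert (HL' : 0 < L') by (unfold L'; assert (0 <= Rabs L) by apply Rabs_pos; lra).
  assert (Hx1 : 0 < x). { unfold x. apply Rmin_pos. lra. apply Rdiv_lt_0_compat; lra. }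
  assert (Hx2 : x <= rho / 2) by apply Rmin_l.
  assert (Hx3 : x <= Rabs a / (2 * L')) by apply Rmin_r.
  specialize (H x ltac:(lra)).
  assert (L * x <= L' * x). { apply Rmult_le_compat_r. lra. unfold L'. assert (L <= Rabs L) by apply Rle_abs. lra. }
  assert (L' * x <= Rabs a / 2).
  { apply Rle_trans with (L' * (Rabs a / (2 * L'))). apply Rmult_le_compat_l; lra. right. field. lra. }
  lra.
Qed.

Lemma uniq N : forall c K rho, 0 < rho -> (forall x, 0 < x < rho -> Rabs (ev c N x) <= K * x ^ (S N)) ->
  forall k, (k <= N)%nat -> c k = 0.
Proof.
  induction N; intros c K rho Hr H k Hk.
  - assert (k = 0%nat) by lia. subst. apply (zero_of_small _ K (Rmin rho 1)).
    apply Rmin_pos; lra. intros x Hx. assert (x < rho) by (eapply Rlt_le_trans; [apply Hx | apply Rmin_l]).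
    specialize (H x ltac:(lra)). unfold ev in H. simpl in H. rewrite Rmult_1_r, Rmult_1_r in H. auto.
  - destruct (ev_bound (fun k => c (S k)) N) as [M HM].
    assert (H0 : c 0%nat = 0).
    { apply (zero_of_small _ (Rabs K + M) (Rmin rho 1)). apply Rmin_pos; lra.
      intros x Hx. assert (x < rho) by (eapply Rlt_le_trans; [apply Hx | apply Rmin_l]).
      assert (x < 1) by (eapply Rlt_le_trans; [apply Hx | apply Rmin_r]).
      specialize (H x ltac:(lra)). rewrite ev_shift in H.
      specialize (HM x ltac:(rewrite Rabs_right; lra)).
      replace (c 0%nat) with ((c 0%nat + x * ev (fun k => c (S k)) N x) - x * ev (fun k => c (S k)) N x) by ring.
      eapply Rle_trans. apply Rabs_triang. rewrite Rabs_Ropp, Rabs_mult, (Rabs_right x) by lra.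
      assert (K * x ^ S (S N) <= Rabs K * x).
      { apply Rle_trans with (Rabs K * x ^ S (S N)). apply Rmult_le_compat_r. apply pow_le; lra. apply Rle_abs.
        apply Rmult_le_compat_l. apply Rabs_pos. change (x ^ S (S N)) with (x * x ^ S N).
        apply Rle_trans with (x * 1); [|lra]. apply Rmult_le_compat_l. lra.
        rewrite <- (pow1 (S N)). apply pow_incr. lra. }
      assert (x * Rabs (ev (fun k : nat => c (S k)) N x) <= M * x).
      { rewrite Rmult_comm. apply Rmult_le_compat_r; lra. }
      lra. }
    destruct k. auto.
    apply (IHN (fun k => c (S k)) K rho Hr). 2: lia.
    intros x Hx. specialize (H x Hx). rewrite ev_shift, H0, Rplus_0_l, Rabs_mult, (Rabs_right x) in H by lra.
    simpl pow in H. apply Rmult_le_reg_l with x. lra. simpl. lra.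
Qed.

Lemma taylor0_ext f g : (forall x, f x = g x) -> taylor0 f = taylor0 g.
Proof. intros E. apply functional_extensionality. intros n. unfold taylor0. rewrite (Derive_n_ext f g); auto. Qed.

Lemma taylor0_0 f : taylor0 f 0%nat = f 0.
Proof. unfold taylor0. simpl. field. Qed.

Lemma lip_pow k y z R : 1 <= R -> Rabs y <= R -> Rabs z <= R ->
  Rabs (y ^ k - z ^ k) <= INR k * R ^ k * Rabs (y - z).
Proof.
  intros HR Hy Hz. induction k.
  - simpl. replace (1-1) with 0 by ring. rewrite Rabs_R0. lra.
  - simpl pow. replace (y * y ^ k - z * z ^ k) with (y * (y ^ k - z ^ k) + z ^ k * (y - z)) by ring.
    eapply Rle_trans. apply Rabs_triang. rewrite !Rabs_mult.
    assert (HRk : R ^ k <= R * R ^ k). { rewrite <- (Rmult_1_l (R ^ k)) at 1. apply Rmult_le_compat_r. apply pow_le; lra. lra. }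
    assert (Hzk : Rabs (z ^ k) <= R ^ k). { rewrite <- RPow_abs. apply pow_incr. split. apply Rabs_pos. auto. }
    assert (A1 : Rabs y * Rabs (y ^ k - z ^ k) <= R * (INR k * R ^ k * Rabs (y - z))).
    { apply Rmult_le_compat; auto using Rabs_pos. }
    assert (A2 : Rabs (z ^ k) * Rabs (y - z) <= R * R ^ k * Rabs (y - z)).
    { apply Rmult_le_compat_r. apply Rabs_pos. lra. }
    rewrite S_INR. assert (0 <= Rabs (y - z)) by apply Rabs_pos. assert (0 <= INR k) by apply pos_INR.
    nra.
Qed.

Lemma ev_lip c N R : 1 <= R -> exists L, 0 <= L /\ forall y z, Rabs y <= R -> Rabs z <= R ->
  Rabs (ev c N y - ev c N z) <= L * Rabs (y - z).
Proof.
  intros HR. exists (sum_f_R0 (fun k => Rabs (c k) * (INR k * R ^ k)) N). split.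
  - apply cond_pos_sum. intros k. apply Rmult_le_pos. apply Rabs_pos. apply Rmult_le_pos. apply pos_INR. apply pow_le; lra.
  - intros y z Hy Hz. unfold ev. rewrite <- minus_sum. eapply Rle_trans. apply sum_f_R0_triangle.
    rewrite Rmult_comm, scal_sum. apply sum_Rle. intros k _.
    rewrite <- Rmult_minus_distr_l, Rabs_mult. rewrite Rmult_assoc. apply Rmult_le_compat_l. apply Rabs_pos.
    apply lip_pow; auto.
Qed.

Lemma abs4 a b c d : Rabs (a + b + c + d) <= Rabs a + Rabs b + Rabs c + Rabs d.
Proof. pose proof (Rabs_triang (a+b+c) d). pose proof (Rabs_triang (a+b) c). pose proof (Rabs_triang a b). lra. Qed.

Theorem taylor0_comp a b : smooth a -> smooth b -> b 0 = 0 ->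
  taylor0 (fun x => a (b x)) = fps_comp (taylor0 a) (taylor0 b).
Proof.
  intros Sa Sb Hb0. apply functional_extensionality. intros N.
  set (A := taylor0 a). set (B := taylor0 b).
  assert (HB0 : B 0%nat = 0) by (unfold B; rewrite taylor0_0; auto).
  destruct (taylor a N Sa) as [Ka HKa].
  destruct (taylor b N Sb) as [Kb HKb].
  destruct (taylor b 0 Sb) as [Lb HLb].
  destruct (taylor _ N (smooth_comp a b Sa Sb)) as [Kab HKab].
  destruct (ev_bound B N) as [MB HMB].
  set (RR := 1 + Rabs Lb + Rabs MB).
  assert (HR : 1 <= RR) by (unfold RR; assert (0 <= Rabs Lb) by apply Rabs_pos; assert (0 <= Rabs MB) by apply Rabs_pos; lra).
  destruct (ev_lip A N RR HR) as [LA [HLA0 HLA]].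
  destruct (comp_approx A B N HB0) as [Kc HKc].
  set (rho := / (1 + Rabs Lb)).
  assert (HLb0 : 0 <= Rabs Lb) by apply Rabs_pos.
  assert (Hrho : 0 < rho) by (unfold rho; apply Rinv_0_lt_compat; lra).
  assert (Hrho1 : rho <= 1). { unfold rho. rewrite <- Rinv_1. apply Rinv_le_contravar; lra. }
  assert (Hbx : forall x, 0 < x < rho -> Rabs (b x) <= Rabs Lb * x).
  { intros x Hx. specialize (HLb x ltac:(rewrite Rabs_right; lra)).
    replace (ev (taylor0 b) 0 x) with 0 in HLb by (unfold ev; simpl; fold B; rewrite HB0; ring).
    rewrite Rminus_0_r, (Rabs_right x) in HLb by lra. simpl in HLb. rewrite Rmult_1_r in HLb.
    eapply Rle_trans. apply HLb. apply Rmult_le_compat_r. lra. apply Rle_abs. }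
  assert (Hbx1 : forall x, 0 < x < rho -> Rabs (b x) < 1).
  { intros x Hx. eapply Rle_lt_trans. apply Hbx; auto.
    assert (Rabs Lb * x < 1); [|lra].
    apply Rle_lt_trans with (Rabs Lb * rho). apply Rmult_le_compat_l; lra.
    unfold rho. apply Rmult_lt_reg_l with (1 + Rabs Lb). lra. field_simplify; lra. }
  assert (Key : forall k, (k <= N)%nat -> taylor0 (fun x => a (b x)) k - fps_comp A B k = 0).
  { apply (uniq N _ (Kab + Rabs Ka * Rabs Lb ^ S N + LA * Rabs Kb + Rabs Kc) rho Hrho).
    intros x Hx. rewrite <- ev_minus.
    assert (Hx1 : Rabs x <= 1) by (rewrite Rabs_right; lra).
    assert (HxR : Rabs x = x) by (rewrite Rabs_right; lra).
    specialize (HKab x Hx1). specialize (HKa (b x) ltac:(apply Rlt_le, Hbx1; auto)).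
    specialize (HKb x Hx1). specialize (HKc x Hx1). specialize (HMB x Hx1).
    specialize (HLA (b x) (ev B N x) ltac:(unfold RR; specialize (Hbx1 x Hx); assert (0 <= Rabs MB) by apply Rabs_pos; lra)
                     ltac:(unfold RR; assert (MB <= Rabs MB) by apply Rle_abs; lra)).
    rewrite HxR in *.
    assert (E1 : Rabs Ka * Rabs (b x) ^ S N <= Rabs Ka * Rabs Lb ^ S N * x ^ S N).
    { rewrite Rmult_assoc, <- Rpow_mult_distr. apply Rmult_le_compat_l. apply Rabs_pos.
      apply pow_incr. split. apply Rabs_pos. apply Hbx; auto. }
    assert (E2 : Ka * Rabs (b x) ^ S N <= Rabs Ka * Rabs (b x) ^ S N).
    { apply Rmult_le_compat_r. apply pow_le, Rabs_pos. apply Rle_abs. }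
    assert (E3 : Kc * x ^ S N <= Rabs Kc * x ^ S N).
    { apply Rmult_le_compat_r. apply pow_le; lra. apply Rle_abs. }
    assert (E4 : LA * Rabs (b x - ev B N x) <= LA * Rabs Kb * x ^ S N).
    { rewrite Rmult_assoc. apply Rmult_le_compat_l; auto. eapply Rle_trans. apply HKb.
      apply Rmult_le_compat_r. apply pow_le; lra. apply Rle_abs. }
    fold A in HKa, HKab. fold B in HKb.
    replace (ev (taylor0 (fun x0 : R => a (b x0))) N x - ev (fps_comp A B) N x) with
      ((ev (taylor0 (fun x0 : R => a (b x0))) N x - a (b x)) + (a (b x) - ev A N (b x)) +
        (ev A N (b x) - ev A N (ev B N x)) + (ev A N (ev B N x) - ev (fps_comp A B) N x)) by ring.
    rewrite Rabs_minus_sym in HKab.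
    eapply Rle_trans; [apply abs4|].
    repeat rewrite Rmult_plus_distr_r. lra. }
  specialize (Key N (le_n _)). lra.
Qed.

Lemma taylor0_id : taylor0 (fun x => x) = fps_X.
Proof.
  apply functional_extensionality. intros n. unfold taylor0, fps_X.
  destruct n. simpl. field. destruct n. simpl. rewrite Derive_id. field.
  rewrite Derive_n_S. rewrite (Derive_n_ext (Derive (fun x => x)) (fun _ => 1)).
  rewrite Derive_n_const. simpl. unfold Rdiv; ring. intros; apply Derive_id.
Qed.

Fixpoint prodR (f : nat -> R) (n : nat) : R :=
  match n with O => 1 | S n => prodR f n * f n end.

Lemma bernoulli s M : 0 <= s -> 1 + INR M * s <= (1 + s) ^ M.
Proof.
  intros Hs. induction M. simpl; lra. rewrite S_INR. simpl pow.
  assert (0 <= INR M) by apply pos_INR. nra.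
Qed.

Lemma nat_big A e : 0 < e -> exists n : nat, A <= INR n * e.
Proof. intros He. destruct (INR_archimed e A ltac:(lra)) as [n Hn]. exists n. lra. Qed.

Lemma TW a B2 t T (M : nat) : 0 < a -> 0 <= B2 -> 0 <= t -> t <= T -> a * T < 1 -> B2 * T < 1 ->
  1 + B2 <= INR M * a * (1 - B2 * T) -> (1 + t) * (1 - a * t) ^ M <= 1 - B2 * t.
Proof.
  intros Ha HB Ht HtT HaT HBT HM.
  assert (Hat0 : 0 <= a * t) by nra. assert (Hat1 : a * t <= a * T) by nra.
  set (X := (1 - a * t) ^ M). set (Y := (1 + a * t) ^ M).
  assert (HX : 0 <= X) by (apply pow_le; nra).
  assert (HXY : X * Y <= 1).
  { unfold X, Y. rewrite <- Rpow_mult_distr. apply (Rle_trans _ (1 ^ M)). apply pow_incr. nra. rewrite pow1; lra. }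
  assert (HY : 1 + INR M * (a * t) <= Y) by (apply bernoulli; nra).
  assert (H1 : 1 + t <= (1 - B2 * t) * (1 + INR M * (a * t))).
  { assert (0 <= INR M) by apply pos_INR.
    assert (1 + B2 <= INR M * a * (1 - B2 * t)).
    { apply Rle_trans with (1 := HM). apply Rmult_le_compat_l. nra. nra. }
    nra. }
  assert (H2 : (1 - B2 * t) * (1 + INR M * (a * t)) <= (1 - B2 * t) * Y).
  { apply Rmult_le_compat_l. nra. auto. }
  assert (H3 : (1 + t) * X <= (1 - B2 * t) * Y * X) by (apply Rmult_le_compat_r; lra).
  assert (H4 : (1 - B2 * t) * Y * X <= 1 - B2 * t).
  { rewrite Rmult_assoc. rewrite <- (Rmult_1_r (1 - B2 * t)) at 2. apply Rmult_le_compat_l. nra. lra. }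
  lra.
Qed.

Lemma TL B t T (L : nat) : 0 <= B -> 0 <= t -> t <= T -> B * T < 1 ->
  B <= INR L * (1 - B * T) -> 1 <= (1 - B * t) * (1 + t) ^ L.
Proof.
  intros HB Ht HtT HBT HL.
  assert (HY : 1 + INR L * t <= (1 + t) ^ L) by (apply bernoulli; lra).
  assert (0 <= INR L) by apply pos_INR.
  assert (B <= INR L * (1 - B * t)). { apply Rle_trans with (1 := HL). apply Rmult_le_compat_l; nra. }
  assert (1 <= (1 - B * t) * (1 + INR L * t)) by nra.
  assert ((1 - B * t) * (1 + INR L * t) <= (1 - B * t) * (1 + t) ^ L). { apply Rmult_le_compat_l; nra. }
  lra.
Qed.

Lemma core (k F : R -> R) (p : nat) (a B d : R) :
  0 < a -> 0 <= B -> 0 < d -> a * d ^ p < 1 -> 2 ^ p * B * d ^ p < 1 ->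
  (forall y, 0 < y <= d -> k y <= y * (1 - a * y ^ p)) ->
  (forall y, 0 < y <= d -> y * (1 - B * y ^ p) <= k y) ->
  (forall u v, 0 < u -> u < v -> v <= d -> (1 - B * v ^ p) * (v - u) <= k v - k u) ->
  (forall y, F (k y) = k (F y)) ->
  (forall y, 0 < y -> y <= d / 2 -> 0 < F y /\ F y <= 2 * y) ->
  (forall N, exists C rho, 0 < rho /\ forall y, 0 < y < rho -> Rabs (F y - y) <= C * y ^ (S N)) ->
  (forall eps, 0 < eps -> exists y, 0 < y < eps /\ F y <> y) ->
  False.
Proof.
  intros Ha HB Hd HaT HBT C1 C2 C3 C4 C5 C6 C7.
  set (T := d ^ p). set (B2 := 2 ^ p * B). fold T in HaT. fold T in HBT.
  assert (HT : 0 < T) by (apply pow_lt; lra).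
  assert (H2p : 1 <= 2 ^ p) by (rewrite <- (pow1 p); apply pow_incr; lra).
  assert (HBB2 : B <= B2) by (unfold B2; nra).
  assert (HB2T : B2 * T < 1) by (unfold B2; lra).
  assert (HBT0 : B * T < 1) by (assert (B * T <= B2 * T) by (apply Rmult_le_compat_r; lra); lra).
  set (eta := 1 - B2 * T).
  assert (Heta : 0 < eta) by (unfold eta; lra).
  destruct (nat_big (1 + B2) (a * eta) ltac:(apply Rmult_lt_0_compat; lra)) as [M0 HM0].
  set (N := M0).
  destruct (C6 N) as [C [rho [Hrho HC]]].
  destruct (C7 (Rmin rho (d / 2)) ltac:(apply Rmin_pos; lra)) as [x0 [[Hx0 Hx0'] Hfx0]].
  assert (Hx0r : x0 < rho) by (eapply Rlt_le_trans; [apply Hx0' | apply Rmin_l]).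
  assert (Hx0d : x0 <= d / 2) by (left; eapply Rlt_le_trans; [apply Hx0' | apply Rmin_r]).
  set (u := fun n => Nat.iter n k x0).
  assert (uS : forall n, u (S n) = k (u n)) by reflexivity.
  assert (tle : forall y, 0 < y <= d -> y ^ p <= T).
  { intros y Hy. apply pow_incr. lra. }
  assert (Hu : forall n, 0 < u n <= x0).
  { induction n. simpl. lra. rewrite uS.
    assert (Hy : 0 < u n <= d) by lra. specialize (C1 _ Hy). specialize (C2 _ Hy).
    assert (0 <= u n ^ p) by (apply pow_le; lra). specialize (tle _ Hy).
    assert (B * u n ^ p <= B * T) by (apply Rmult_le_compat_l; lra).
    assert (0 < u n * (1 - B * u n ^ p)) by (apply Rmult_lt_0_compat; lra).
    assert (0 <= a * u n ^ p) by (apply Rmult_le_pos; lra).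
    assert (u n * (1 - a * u n ^ p) <= u n) by nra.
    split; lra. }
  set (t := fun n => u n ^ p).
  assert (Ht : forall n, 0 <= t n <= T).
  { intros n. split. apply pow_le. specialize (Hu n). lra. apply tle. specialize (Hu n). lra. }
  set (v := fun n => F (u n)).
  assert (vS : forall n, v (S n) = k (v n)) by (intros; unfold v; rewrite uS; apply C4).
  assert (Hv : forall n, 0 < v n <= 2 * u n).
  { intros n. apply C5; specialize (Hu n); lra. }
  set (dd := fun n => Rabs (v n - u n)).
  assert (D1 : forall n, (1 - B2 * t n) * dd n <= dd (S n)).
  { intros n. unfold dd. rewrite uS, vS. specialize (Hu n). specialize (Hv n). specialize (Ht n).
    assert (Hpow : forall w, 0 < w <= 2 * u n -> B * w ^ p <= B2 * t n).
    { intros w Hw. unfold B2, t. replace (2 ^ p * B * u n ^ p) with (B * (2 * u n) ^ p) by (rewrite Rpow_mult_distr; ring).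
      apply Rmult_le_compat_l. lra. apply pow_incr. lra. }
    destruct (Rtotal_order (v n) (u n)) as [Hlt|[Heq|Hgt]].
    - specialize (C3 (v n) (u n) ltac:(lra) Hlt ltac:(lra)).
      specialize (Hpow (u n) ltac:(lra)).
      rewrite (Rabs_left (v n - u n)) by lra. rewrite Rabs_left1.
      2:{ assert (0 <= (1 - B * u n ^ p)). assert (0 <= t n) by lra. nra. nra. }
      assert (0 <= t n) by lra. nra.
    - rewrite Heq. replace (u n - u n) with 0 by ring. rewrite Rabs_R0, Rmult_0_r. apply Rabs_pos.
    - specialize (C3 (u n) (v n) ltac:(lra) Hgt ltac:(lra)).
      specialize (Hpow (v n) ltac:(lra)).
      rewrite (Rabs_right (v n - u n)) by lra. rewrite Rabs_right.
      2:{ assert (0 <= (1 - B * v n ^ p)). assert (0 <= t n) by lra. nra. nra. }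
      assert (0 <= t n) by lra. nra. }
  assert (D2 : forall n, u (S n) <= u n * (1 - a * t n)).
  { intros n. rewrite uS. apply C1. specialize (Hu n). lra. }
  assert (D3 : forall n, u n * (1 - B * t n) <= u (S n)).
  { intros n. rewrite uS. apply C2. specialize (Hu n). lra. }
  assert (Flat : forall n, dd n <= C * u n ^ (S N)).
  { intros n. unfold dd, v. apply HC. specialize (Hu n). lra. }
  assert (Hdd0 : 0 < dd 0%nat). { unfold dd, v. simpl. apply Rabs_pos_lt. lra. }
  set (P := prodR (fun j => 1 + t j)). set (Q := prodR (fun j => 1 - a * t j)).
  assert (HQ : forall n, 0 < Q n).
  { induction n. unfold Q; simpl; lra. change (Q (S n)) with (Q n * (1 - a * t n)). apply Rmult_lt_0_compat; auto. specialize (Ht n).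
    assert (a * t n <= a * T) by (apply Rmult_le_compat_l; lra). lra. }
  assert (HP1 : forall n, 1 <= P n).
  { induction n. unfold P; simpl; lra. change (P (S n)) with (P n * (1 + t n)). specialize (Ht n). nra. }
  assert (Hdd : forall n, 0 <= dd n) by (intros; apply Rabs_pos).
  assert (L1 : forall n, dd 0%nat * P n * Q n ^ (S N) <= dd n).
  { induction n. unfold P, Q; simpl. rewrite pow1. lra.
    eapply Rle_trans. 2: apply D1.
    specialize (Ht n). 
    assert (TWn := TW a B2 (t n) T (S N) Ha ltac:(lra) ltac:(lra) ltac:(lra) HaT HB2T).
    assert (1 + B2 <= INR (S N) * a * (1 - B2 * T)).
    { rewrite S_INR. unfold N. fold eta. assert (0 < a * eta) by (apply Rmult_lt_0_compat; lra). nra. }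
    specialize (TWn H).
    change (P (S n)) with (P n * (1 + t n)). change (Q (S n)) with (Q n * (1 - a * t n)). rewrite Rpow_mult_distr.
    assert (0 <= (1 + t n) * (1 - a * t n) ^ S N). { apply Rmult_le_pos. lra. apply pow_le. nra. }
    assert (0 <= dd 0%nat * P n * Q n ^ S N).
    { apply Rmult_le_pos. apply Rmult_le_pos. lra. specialize (HP1 n); lra. apply pow_le. specialize (HQ n); lra. }
    replace (dd 0%nat * (P n * (1 + t n)) * (Q n ^ S N * (1 - a * t n) ^ S N)) with
      ((dd 0%nat * P n * Q n ^ S N) * ((1 + t n) * (1 - a * t n) ^ S N)) by ring.
    rewrite (Rmult_comm (1 - B2 * t n)).
    apply Rmult_le_compat; auto. }
  assert (L2 : forall n, u n <= x0 * Q n).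
  { induction n. unfold Q; simpl. lra. eapply Rle_trans. apply D2. change (Q (S n)) with (Q n * (1 - a * t n)).
    specialize (Ht n). rewrite <- Rmult_assoc. apply Rmult_le_compat_r. nra. auto. }
  assert (HCpos : 0 < C).
  { specialize (Flat 0%nat). simpl u in Flat. assert (0 < x0 ^ S N) by (apply pow_lt; lra).
    destruct (Rle_lt_dec C 0); auto. assert (C * x0 ^ S N <= 0) by nra. lra. }
  set (Kp := C * x0 ^ S N / dd 0%nat).
  assert (L3 : forall n, P n <= Kp).
  { intros n. unfold Kp. apply Rmult_le_reg_r with (dd 0%nat * Q n ^ S N).
    apply Rmult_lt_0_compat. lra. apply pow_lt; auto.
    replace (C * x0 ^ S N / dd 0%nat * (dd 0%nat * Q n ^ S N)) with (C * (x0 * Q n) ^ S N)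
      by (rewrite Rpow_mult_distr; field; lra).
    eapply Rle_trans with (dd n). rewrite <- Rmult_assoc, (Rmult_comm (P n)). apply L1.
    eapply Rle_trans. apply Flat. apply Rmult_le_compat_l. lra. apply pow_incr.
    specialize (Hu n). split; [lra|]. apply L2. }
  assert (HBT' : B * T < 1) by nra.
  destruct (nat_big B (1 - B * T) ltac:(lra)) as [Lint HL].
  assert (L4 : forall n, x0 <= u n * P n ^ Lint).
  { induction n. unfold P; simpl. rewrite pow1. lra.
    specialize (Ht n). specialize (Hu n).
    assert (TLn := TL B (t n) T Lint HB ltac:(lra) ltac:(lra) HBT' ltac:(lra)).
    change (P (S n)) with (P n * (1 + t n)). rewrite Rpow_mult_distr.
    apply Rle_trans with (1 := IHn).
    assert (HPn : 0 <= P n ^ Lint) by (apply pow_le; specialize (HP1 n); lra).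
    assert (0 <= 1 + t n) by lra.
    apply Rle_trans with (u n * P n ^ Lint * ((1 - B * t n) * (1 + t n) ^ Lint)).
    { rewrite <- (Rmult_1_r (u n * P n ^ Lint)) at 1. apply Rmult_le_compat_l. nra. auto. }
    replace (u n * P n ^ Lint * ((1 - B * t n) * (1 + t n) ^ Lint)) with
      ((u n * (1 - B * t n)) * (P n ^ Lint * (1 + t n) ^ Lint)) by ring.
    apply Rmult_le_compat_r. apply Rmult_le_pos; auto. apply pow_le; lra. apply D3. }
  assert (HKp : 1 <= Kp) by (eapply Rle_trans; [apply (HP1 0%nat) | apply L3]).
  set (c := x0 / Kp ^ Lint).
  assert (Hc : 0 < c) by (unfold c; apply Rdiv_lt_0_compat; auto; apply pow_lt; lra).
  assert (L5 : forall n, c <= u n).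
  { intros n. unfold c. specialize (L4 n). specialize (Hu n).
    assert (HPK : P n ^ Lint <= Kp ^ Lint) by (apply pow_incr; split; [specialize (HP1 n); lra| apply L3]).
    assert (0 < Kp ^ Lint) by (apply pow_lt; lra).
    apply Rmult_le_reg_r with (Kp ^ Lint); auto. unfold Rdiv. rewrite Rmult_assoc, Rinv_l by lra.
    nra. }
  assert (L6 : forall n, u n <= x0 - INR n * (a * c ^ S p)).
  { induction n. simpl. lra. rewrite S_INR. specialize (D2 n). specialize (L5 n).
    assert (c ^ S p <= u n ^ S p) by (apply pow_incr; lra).
    assert (u n * (1 - a * t n) = u n - a * u n ^ S p) by (unfold t; simpl; ring).
    nra. }
  assert (Hac : 0 < a * c ^ S p) by (apply Rmult_lt_0_compat; auto; apply pow_lt; auto).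
  destruct (nat_big x0 (a * c ^ S p) Hac) as [n Hn].
  specialize (L6 n). specialize (Hu n). lra.
Qed.

Lemma abs_bnd x y z : Rabs (x - y) <= z -> y - z <= x <= y + z.
Proof. unfold Rabs. destruct (Rcase_abs (x - y)); lra. Qed.

Lemma mvt_closed k u v : smooth k -> u < v ->
  exists xi, u <= xi <= v /\ k v - k u = Derive k xi * (v - u).
Proof.
  intros Sk Huv. destruct (MVT_gen k u v (Derive k)) as [c [Hc E]].
  - intros x _. apply Derive_correct, smooth_ex_derive; auto.
  - intros x _. apply smooth_continuity; auto.
  - rewrite Rmin_left, Rmax_right in Hc by lra. exists c. auto.
Qed.

Lemma mvt_lower k u v lo : smooth k -> u < v -> (forall xi, u <= xi <= v -> lo <= Derive k xi) ->
  lo * (v - u) <= k v - k u.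
Proof. intros Sk Huv H. destruct (mvt_closed k u v Sk Huv) as [xi [Hxi E]]. rewrite E.
  apply Rmult_le_compat_r. lra. auto. Qed.

Lemma mvt_upper k u v hi : smooth k -> u < v -> (forall xi, u <= xi <= v -> Derive k xi <= hi) ->
  k v - k u <= hi * (v - u).
Proof. intros Sk Huv H. destruct (mvt_closed k u v Sk Huv) as [xi [Hxi E]]. rewrite E.
  apply Rmult_le_compat_r. lra. auto. Qed.

Lemma pow_le_self y p : 0 <= y <= 1 -> (1 <= p)%nat -> y ^ p <= y.
Proof. intros Hy Hp. destruct p. lia. change (y ^ S p) with (y * y ^ p).
  apply Rle_trans with (y * 1); [|lra].
  apply Rmult_le_compat_l. lra. rewrite <- (pow1 p). apply pow_incr. lra. Qed.

Lemma ev_O c y : ev c 0 y = c 0%nat.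
Proof. unfold ev. simpl. ring. Qed.

Definition flatP (F : R -> R) := forall N, exists C rho, 0 < rho /\ forall y, 0 < y < rho -> Rabs (F y - y) <= C * y ^ (S N).

Lemma F2 F : flatP F -> exists rho, 0 < rho /\ forall y, 0 < y < rho -> F y <= 2 * y.
Proof.
  intros H. destruct (H 1%nat) as [C [rho [Hr HC]]].
  exists (Rmin rho (/ (Rabs C + 1))). split. apply Rmin_pos; auto. apply Rinv_0_lt_compat.
  assert (0 <= Rabs C) by apply Rabs_pos; lra.
  intros y Hy. assert (y < rho) by (eapply Rlt_le_trans; [apply Hy| apply Rmin_l]).
  assert (Hy2 : y < / (Rabs C + 1)) by (eapply Rlt_le_trans; [apply Hy| apply Rmin_r]).
  specialize (HC y ltac:(lra)). apply abs_bnd in HC.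
  assert (HCa : 0 <= Rabs C) by apply Rabs_pos.
  assert (y * (Rabs C + 1) < 1).
  { apply Rmult_lt_reg_r with (/ (Rabs C + 1)). apply Rinv_0_lt_compat; lra.
    rewrite Rmult_assoc, Rinv_r, Rmult_1_l, Rmult_1_r by lra. auto. }
  assert (C * y ^ 2 <= Rabs C * y * y). { simpl. rewrite Rmult_1_r. 
    assert (C <= Rabs C) by apply Rle_abs. assert (0 <= y * y) by nra. nra. }
  nra.
Qed.

Section Cases.
Variables (F : R -> R).
Hypothesis FP : flatP F.
Hypothesis Fpos : forall y, 0 < y -> 0 < F y.
Hypothesis C7 : forall eps, 0 < eps -> exists y, 0 < y < eps /\ F y <> y.

Lemma C5_of d rho2 : (forall y, 0 < y < rho2 -> F y <= 2 * y) -> d <= rho2 -> 0 < d ->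
  forall y, 0 < y -> y <= d / 2 -> 0 < F y /\ F y <= 2 * y.
Proof. intros H Hd Hd0 y Hy Hy2. split. apply Fpos; auto. apply H. lra. Qed.

Lemma caseA k : smooth k -> k 0 = 0 -> 0 < Derive k 0 < 1 -> (forall y, F (k y) = k (F y)) -> False.
Proof.
  intros Sk Hk0 Hl Hc. set (l := Derive k 0) in *.
  destruct (taylor (Derive k) 0 (smooth_Derive k Sk)) as [K HK].
  destruct (F2 F FP) as [rho2 [Hr2 HF2]].
  assert (HKa : 0 <= Rabs K) by apply Rabs_pos.
  set (d := Rmin (Rmin 1 rho2) (Rmin ((1 - l) / (2 * (Rabs K + 1))) (l / (2 * (Rabs K + 1))))).
  assert (Hd : 0 < d). { unfold d. repeat apply Rmin_pos; try lra; apply Rdiv_lt_0_compat; lra. }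
  assert (Hd1 : d <= 1) by (unfold d; eapply Rle_trans; [apply Rmin_l| apply Rmin_l]).
  assert (Hd2 : d <= rho2) by (unfold d; eapply Rle_trans; [apply Rmin_l| apply Rmin_r]).
  assert (Hd3 : d <= (1 - l) / (2 * (Rabs K + 1))) by (unfold d; eapply Rle_trans; [apply Rmin_r| apply Rmin_l]).
  assert (Hd4 : d <= l / (2 * (Rabs K + 1))) by (unfold d; eapply Rle_trans; [apply Rmin_r| apply Rmin_r]).
  assert (Kd1 : (Rabs K + 1) * d <= (1 - l) / 2).
  { apply Rle_trans with ((Rabs K + 1) * ((1 - l) / (2 * (Rabs K + 1)))). apply Rmult_le_compat_l; lra. right; field; lra. }
  assert (Kd2 : (Rabs K + 1) * d <= l / 2).
  { apply Rle_trans with ((Rabs K + 1) * (l / (2 * (Rabs K + 1)))). apply Rmult_le_compat_l; lra. right; field; lra. }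
  assert (DB : forall xi, 0 <= xi <= d -> l / 2 <= Derive k xi <= (1 + l) / 2).
  { intros xi Hxi. specialize (HK xi ltac:(rewrite Rabs_right; lra)).
    rewrite ev_O, taylor0_0 in HK. fold l in HK. simpl in HK. rewrite Rmult_1_r, (Rabs_right xi) in HK by lra.
    apply abs_bnd in HK. assert (K * xi <= (Rabs K + 1) * d).
    { assert (K <= Rabs K) by apply Rle_abs. nra. } lra. }
  apply (core k F 0 ((1 - l) / 2) (1 - l / 2) d); auto; simpl; try lra.
  - intros y Hy. assert (k y - k 0 <= (1 + l) / 2 * (y - 0)) by (apply mvt_upper; auto; try lra; intros; apply DB; lra). lra.
  - intros y Hy. assert (l / 2 * (y - 0) <= k y - k 0) by (apply mvt_lower; auto; try lra; intros; apply DB; lra). lra.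
  - intros u v Hu Huv Hv. replace (1 - (1 - l / 2) * 1) with (l / 2) by ring.
    apply mvt_lower; auto. intros; apply DB; lra.
  - apply C5_of with rho2; auto.
Qed.


Lemma dchoose (c K1 a B rho1 rho2 : R) (p : nat) : (1 <= p)%nat -> 0 < c -> 0 < rho1 -> 0 < rho2 -> 0 <= a -> 0 <= B ->
  exists d, 0 < d /\ d <= 1 /\ d < rho1 /\ d <= rho2 /\ (Rabs K1 + 1) * d <= c / 2 /\
    a * d ^ p < 1 /\ 2 ^ p * B * d ^ p < 1 /\ B * d ^ p <= 1.
Proof.
  intros Hp Hc Hr1 Hr2 Ha HB.
  assert (HKa : 0 <= Rabs K1) by apply Rabs_pos.
  assert (H2p : 1 <= 2 ^ p) by (rewrite <- (pow1 p); apply pow_incr; lra).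
  set (W := a + 2 ^ p * B + 1). assert (HW : 1 <= W) by (unfold W; nra).
  set (d := Rmin (Rmin (rho1 / 2) 1) (Rmin rho2 (Rmin (c / (2 * (Rabs K1 + 1))) (1 / (2 * W))))).
  assert (Hd : 0 < d). { unfold d. repeat apply Rmin_pos; try lra; apply Rdiv_lt_0_compat; lra. }
  assert (Hd1 : d <= rho1 / 2) by (unfold d; eapply Rle_trans; [apply Rmin_l| apply Rmin_l]).
  assert (Hd2 : d <= 1) by (unfold d; eapply Rle_trans; [apply Rmin_l| apply Rmin_r]).
  assert (Hd3 : d <= rho2) by (unfold d; eapply Rle_trans; [apply Rmin_r| apply Rmin_l]).
  assert (Hd4 : d <= c / (2 * (Rabs K1 + 1))) by (unfold d; eapply Rle_trans; [apply Rmin_r| eapply Rle_trans; [apply Rmin_r| apply Rmin_l]]).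
  assert (Hd5 : d <= 1 / (2 * W)) by (unfold d; eapply Rle_trans; [apply Rmin_r| eapply Rle_trans; [apply Rmin_r| apply Rmin_r]]).
  assert (HWd : W * d <= 1 / 2).
  { apply Rle_trans with (W * (1 / (2 * W))). apply Rmult_le_compat_l; lra. right; field; lra. }
  assert (Hdp : d ^ p <= d) by (apply pow_le_self; auto; lra).
  assert (Hdp0 : 0 <= d ^ p) by (apply pow_le; lra).
  assert (EW : W * d = a * d + 2 ^ p * B * d + d) by (unfold W; ring).
  assert (H2B : 0 <= 2 ^ p * B * d) by (apply Rmult_le_pos; [nra| lra]).
  assert (HaD : 0 <= a * d) by nra.
  exists d. repeat split; try lra.
  - apply Rle_trans with ((Rabs K1 + 1) * (c / (2 * (Rabs K1 + 1)))). apply Rmult_le_compat_l; lra. right; field; lra.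
  - assert (a * d ^ p <= a * d) by (apply Rmult_le_compat_l; lra). lra.
  - assert (2 ^ p * B * d ^ p <= 2 ^ p * B * d) by (apply Rmult_le_compat_l; nra). lra.
  - assert (B * d ^ p <= 2 ^ p * B * d ^ p) by (apply Rmult_le_compat_r; nra).
    assert (2 ^ p * B * d ^ p <= 2 ^ p * B * d) by (apply Rmult_le_compat_l; nra). lra.
Qed.

Lemma caseB k p c K1 K2 rho1 : (1 <= p)%nat -> c < 0 -> 0 < rho1 -> smooth k -> k 0 = 0 ->
  (forall y, 0 < y < rho1 -> Rabs (k y - (y + c * y ^ (S p))) <= K1 * y ^ (S (S p))) ->
  (forall y, 0 <= y < rho1 -> Rabs (Derive k y - 1) <= K2 * y ^ p) ->
  (forall y, F (k y) = k (F y)) -> False.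
Proof.
  intros Hp Hc Hr1 Sk Hk0 T1 T2 Hcom.
  destruct (F2 F FP) as [rho2 [Hr2 HF2]].
  assert (HK1 : 0 <= Rabs K1) by apply Rabs_pos. assert (HK2 : 0 <= Rabs K2) by apply Rabs_pos.
  set (a := - c / 2). set (B := - c + Rabs K1 + Rabs K2).
  destruct (dchoose (-c) K1 a B rho1 rho2 p Hp ltac:(lra) Hr1 Hr2 ltac:(unfold a; lra) ltac:(unfold B; lra))
    as [d [Hd [Hd1 [Hdr1 [Hdr2 [HK1d [Had [HBd HBd']]]]]]]].
  apply (core k F p a B d); auto; try lra.
  - unfold a; lra. - unfold B; lra.
  - intros y Hy. specialize (T1 y ltac:(lra)). apply abs_bnd in T1.
    assert (Hq : 0 <= y ^ p) by (apply pow_le; lra).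
    change (y ^ S p) with (y * y ^ p) in T1. change (y ^ S (S p)) with (y * (y * y ^ p)) in T1.
    assert (K1 * (y * (y * y ^ p)) <= Rabs K1 * y * (y * y ^ p)).
    { rewrite <- Rmult_assoc. apply Rmult_le_compat_r. nra. apply Rmult_le_compat_r. lra. apply Rle_abs. }
    assert (Rabs K1 * y <= - c / 2) by nra.
    assert (Rabs K1 * y * (y * y ^ p) <= - c / 2 * (y * y ^ p)) by (apply Rmult_le_compat_r; nra).
    unfold a. nra.
  - intros y Hy. specialize (T1 y ltac:(lra)). apply abs_bnd in T1.
    assert (Hq : 0 <= y ^ p) by (apply pow_le; lra).
    change (y ^ S p) with (y * y ^ p) in T1. change (y ^ S (S p)) with (y * (y * y ^ p)) in T1.
    assert (K1 * (y * (y * y ^ p)) <= Rabs K1 * (y * y ^ p)).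
    { apply Rle_trans with (Rabs K1 * (y * (y * y ^ p))). apply Rmult_le_compat_r. nra. apply Rle_abs.
      apply Rmult_le_compat_l. lra. assert (0 <= y * y ^ p) by nra. nra. }
    assert (Hyq : 0 <= y * y ^ p) by (apply Rmult_le_pos; lra).
    assert (Rabs K2 * (y * y ^ p) >= 0) by (apply Rle_ge, Rmult_le_pos; lra).
    unfold B. nra.
  - intros u v Hu Huv Hv. apply mvt_lower; auto. intros xi Hxi.
    specialize (T2 xi ltac:(lra)). apply abs_bnd in T2.
    assert (xi ^ p <= v ^ p) by (apply pow_incr; lra).
    assert (0 <= xi ^ p) by (apply pow_le; lra).
    assert (K2 * xi ^ p <= Rabs K2 * v ^ p).
    { apply Rle_trans with (Rabs K2 * xi ^ p). apply Rmult_le_compat_r; auto. apply Rle_abs. apply Rmult_le_compat_l; auto. }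
    assert (0 <= (- c + Rabs K1) * v ^ p). { apply Rmult_le_pos. lra. apply pow_le; lra. }
    unfold B. nra.
  - apply C5_of with rho2; auto. 
Qed.

Lemma caseC k kinv p c K1 K2 rho1 : (1 <= p)%nat -> 0 < c -> 0 < rho1 -> smooth k -> k 0 = 0 ->
  (forall x, kinv (k x) = x) -> (forall y, k (kinv y) = y) -> (forall x y, x < y -> k x < k y) ->
  (forall y, 0 < y < rho1 -> Rabs (k y - (y + c * y ^ (S p))) <= K1 * y ^ (S (S p))) ->
  (forall y, 0 <= y < rho1 -> Rabs (Derive k y - 1) <= K2 * y ^ p) ->
  (forall y, F (k y) = k (F y)) -> False.
Proof.
  intros Hp Hc Hr1 Sk Hk0 Hi1 Hi2 Hinc T1 T2 Hcom.
  destruct (F2 F FP) as [rho2 [Hr2 HF2]].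
  assert (HK1 : 0 <= Rabs K1) by apply Rabs_pos. assert (HK2 : 0 <= Rabs K2) by apply Rabs_pos.
  set (a := c / 2). set (B := c + Rabs K1 + Rabs K2).
  destruct (dchoose c K1 a B rho1 rho2 p Hp ltac:(lra) Hr1 Hr2 ltac:(unfold a; lra) ltac:(unfold B; lra))
    as [d [Hd [Hd1 [Hdr1 [Hdr2 [HK1d [Had [HBd HBd']]]]]]]].
  assert (E1 : forall x, 0 < x <= d -> x * (1 + a * x ^ p) <= k x).
  { intros y Hy. specialize (T1 y ltac:(lra)). apply abs_bnd in T1.
    assert (Hq : 0 <= y ^ p) by (apply pow_le; lra).
    change (y ^ S p) with (y * y ^ p) in T1. change (y ^ S (S p)) with (y * (y * y ^ p)) in T1.
    assert (K1 * (y * (y * y ^ p)) <= Rabs K1 * y * (y * y ^ p)).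
    { rewrite <- Rmult_assoc. apply Rmult_le_compat_r. nra. apply Rmult_le_compat_r. lra. apply Rle_abs. }
    assert (Rabs K1 * y <= c / 2) by nra.
    assert (Rabs K1 * y * (y * y ^ p) <= c / 2 * (y * y ^ p)) by (apply Rmult_le_compat_r; nra).
    unfold a. nra. }
  assert (E2 : forall x, 0 < x <= d -> k x <= x * (1 + B * x ^ p)).
  { intros y Hy. specialize (T1 y ltac:(lra)). apply abs_bnd in T1.
    assert (Hq : 0 <= y ^ p) by (apply pow_le; lra).
    change (y ^ S p) with (y * y ^ p) in T1. change (y ^ S (S p)) with (y * (y * y ^ p)) in T1.
    assert (K1 * (y * (y * y ^ p)) <= Rabs K1 * (y * y ^ p)).
    { apply Rle_trans with (Rabs K1 * (y * (y * y ^ p))). apply Rmult_le_compat_r. nra. apply Rle_abs.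
      apply Rmult_le_compat_l. lra. assert (0 <= y * y ^ p) by nra. nra. }
    assert (Hyq : 0 <= y * y ^ p) by (apply Rmult_le_pos; lra).
    assert (Rabs K2 * (y * y ^ p) >= 0) by (apply Rle_ge, Rmult_le_pos; lra).
    unfold B. nra. }
  assert (E3 : forall U X, 0 < U -> U < X -> X <= d -> k X - k U <= (1 + B * X ^ p) * (X - U)).
  { intros u v Hu Huv Hv. apply mvt_upper; auto. intros xi Hxi.
    specialize (T2 xi ltac:(lra)). apply abs_bnd in T2.
    assert (xi ^ p <= v ^ p) by (apply pow_incr; lra).
    assert (0 <= xi ^ p) by (apply pow_le; lra).
    assert (K2 * xi ^ p <= Rabs K2 * v ^ p).
    { apply Rle_trans with (Rabs K2 * xi ^ p). apply Rmult_le_compat_r; auto. apply Rle_abs. apply Rmult_le_compat_l; auto. }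
    assert (0 <= (c + Rabs K1) * v ^ p). { apply Rmult_le_pos. lra. apply pow_le; lra. }
    unfold B. nra. }
  assert (Iinc : forall x y, x < y -> kinv x < kinv y).
  { intros x y Hxy. destruct (Rlt_le_dec (kinv x) (kinv y)) as [H|H]; auto.
    destruct (Rle_lt_or_eq_dec _ _ H) as [H'|H'].
    - apply Hinc in H'. rewrite !Hi2 in H'. lra.
    - assert (k (kinv y) = k (kinv x)) by (rewrite H'; auto). rewrite !Hi2 in H0. lra. }
  assert (Ik0 : kinv 0 = 0) by (rewrite <- Hk0 at 1; apply Hi1).
  assert (Hdp0 : 0 <= d ^ p) by (apply pow_le; lra).
  assert (Ir : forall y, 0 < y <= d -> 0 < kinv y <= y).
  { intros y Hy. split. rewrite <- Ik0. apply Iinc; lra.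
    destruct (Rle_lt_dec (kinv y) y) as [H|H]; auto. exfalso.
    destruct (Rle_lt_dec (kinv y) d) as [H2|H2].
    - assert (Hpos : 0 < kinv y) by lra.
      specialize (E1 (kinv y) ltac:(lra)). rewrite Hi2 in E1.
      assert (0 <= a * kinv y ^ p) by (apply Rmult_le_pos; [unfold a; lra| apply pow_le; lra]). nra.
    - apply Hinc in H2. rewrite Hi2 in H2. specialize (E1 d ltac:(lra)).
      assert (0 <= a * d ^ p) by (apply Rmult_le_pos; [unfold a; lra| auto]). nra. }
  assert (H2p : 1 <= 2 ^ p) by (rewrite <- (pow1 p); apply pow_incr; lra).
  set (a' := a / 2 ^ S p).
  assert (Ha' : 0 < a') by (unfold a', a; apply Rdiv_lt_0_compat; [lra| apply pow_lt; lra]).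
  assert (Ha'a : a' <= a).
  { unfold a'. apply Rmult_le_reg_r with (2 ^ S p). apply pow_lt; lra.
    unfold Rdiv. rewrite Rmult_assoc, Rinv_l by (apply pow_nonzero; lra). simpl. unfold a. nra. }
  apply (core kinv F p a' B d); auto; try lra.
  - unfold B; lra.
  - assert (a' * d ^ p <= a * d ^ p) by (apply Rmult_le_compat_r; lra). lra.
  - intros y Hy. destruct (Ir y Hy) as [Hx1 Hx2]. set (x := kinv y) in *.
    assert (Ey : k x = y) by apply Hi2.
    specialize (E1 x ltac:(lra)). specialize (E2 x ltac:(lra)). rewrite Ey in E1, E2.
    assert (x ^ p <= d ^ p) by (apply pow_incr; lra).
    assert (0 <= x ^ p) by (apply pow_le; lra).
    assert (B * x ^ p <= 1) by (apply Rle_trans with (B * d ^ p); auto; apply Rmult_le_compat_l; [unfold B; lra| auto]).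
    assert (Hx2' : y / 2 <= x) by nra.
    assert (HP : (y / 2) ^ S p <= x ^ S p) by (apply pow_incr; lra).
    replace ((y / 2) ^ S p) with (y ^ S p / 2 ^ S p) in HP by (unfold Rdiv; rewrite Rpow_mult_distr, pow_inv; ring).
    change (x ^ S p) with (x * x ^ p) in HP.
    assert (a * (y ^ S p / 2 ^ S p) <= a * (x * x ^ p)) by (apply Rmult_le_compat_l; [unfold a; lra| auto]).
    replace (y * (1 - a' * y ^ p)) with (y - a * (y ^ S p / 2 ^ S p)) by (unfold a'; simpl; field; apply pow_nonzero; lra).
    nra.
  - intros y Hy. destruct (Ir y Hy) as [Hx1 Hx2]. set (x := kinv y) in *.
    assert (Ey : k x = y) by apply Hi2.
    specialize (E2 x ltac:(lra)). rewrite Ey in E2.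
    assert (x ^ p <= y ^ p) by (apply pow_incr; lra).
    assert (0 <= x ^ p) by (apply pow_le; lra).
    assert (y ^ p <= d ^ p) by (apply pow_incr; lra).
    assert (HBy : B * y ^ p <= 1) by (apply Rle_trans with (B * d ^ p); auto; apply Rmult_le_compat_l; [unfold B; lra| auto]).
    assert (HBy0 : 0 <= B * y ^ p) by (apply Rmult_le_pos; [unfold B; lra| apply pow_le; lra]).
    assert (y <= x * (1 + B * y ^ p)).
    { apply Rle_trans with (1 := E2). apply Rmult_le_compat_l. lra. assert (B * x ^ p <= B * y ^ p) by (apply Rmult_le_compat_l; [unfold B; lra| auto]). lra. }
    assert (y * (1 - B * y ^ p) <= x * (1 + B * y ^ p) * (1 - B * y ^ p)) by (apply Rmult_le_compat_r; lra).
    nra.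
  - intros u v Hu Huv Hv. 
    assert (HU := Ir u ltac:(lra)). assert (HX := Ir v ltac:(lra)).
    assert (HUX : kinv u < kinv v) by (apply Iinc; auto).
    specialize (E3 (kinv u) (kinv v) ltac:(lra) HUX ltac:(lra)). rewrite !Hi2 in E3.
    assert (kinv v ^ p <= v ^ p) by (apply pow_incr; lra).
    assert (v ^ p <= d ^ p) by (apply pow_incr; lra).
    assert (HBv : B * v ^ p <= 1) by (apply Rle_trans with (B * d ^ p); auto; apply Rmult_le_compat_l; [unfold B; lra| auto]).
    assert (HBv0 : 0 <= B * v ^ p) by (apply Rmult_le_pos; [unfold B; lra| apply pow_le; lra]).
    assert (v - u <= (1 + B * v ^ p) * (kinv v - kinv u)).
    { apply Rle_trans with (1 := E3). apply Rmult_le_compat_r. lra. assert (B * kinv v ^ p <= B * v ^ p) by (apply Rmult_le_compat_l; [unfold B; lra| auto]). lra. }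
    assert ((1 - B * v ^ p) * (v - u) <= (1 - B * v ^ p) * ((1 + B * v ^ p) * (kinv v - kinv u))) by (apply Rmult_le_compat_l; lra).
    assert ((1 - B * v ^ p) * ((1 + B * v ^ p) * (kinv v - kinv u)) = (kinv v - kinv u) - (B * v ^ p) ^ 2 * (kinv v - kinv u)) by ring.
    assert (0 <= (B * v ^ p) ^ 2 * (kinv v - kinv u)) by (apply Rmult_le_pos; [apply pow2_ge_0| lra]).
    lra.
  - intros y. rewrite <- (Hi1 (F (kinv y))). rewrite <- Hcom. rewrite Hi2. reflexivity.
  - apply C5_of with rho2; auto.
Qed.

End Cases.

Lemma taylor0_1 h : taylor0 h 1%nat = Derive h 0.
Proof. unfold taylor0. simpl. unfold Rdiv. rewrite Rinv_1, Rmult_1_r. reflexivity. Qed.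

Lemma chain_inv h hinv : smooth h -> smooth hinv -> (forall x, hinv (h x) = x) ->
  Derive h 0 * Derive hinv (h 0) = 1.
Proof.
  intros Sh Si Hi. rewrite <- (Derive_comp hinv h 0) by (apply smooth_ex_derive; auto).
  rewrite (Derive_ext _ (fun x => x)) by auto. apply Derive_id.
Qed.

Lemma deriv_pos h hinv : smooth h -> smooth hinv -> (forall x, hinv (h x) = x) ->
  (forall x y, x < y -> h x < h y) -> 0 < Derive h 0.
Proof.
  intros Sh Si Hi Hinc. assert (HC := chain_inv h hinv Sh Si Hi).
  destruct (Rtotal_order (Derive h 0) 0) as [Hn|[H0|Hp]]; auto.
  - exfalso. set (l := Derive h 0) in *.
    destruct (taylor h 1 Sh) as [K HK].
    assert (HKa : 0 <= Rabs K) by apply Rabs_pos.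
    set (y := Rmin (1/2) (- l / (2 * (Rabs K + 1)))).
    assert (Hy : 0 < y) by (unfold y; apply Rmin_pos; [lra| apply Rdiv_lt_0_compat; lra]).
    assert (Hy1 : y <= 1/2) by apply Rmin_l.
    assert (Hy2 : y <= - l / (2 * (Rabs K + 1))) by apply Rmin_r.
    assert (HKy : (Rabs K + 1) * y <= - l / 2).
    { apply Rle_trans with ((Rabs K + 1) * (- l / (2 * (Rabs K + 1)))). apply Rmult_le_compat_l; lra. right; field; lra. }
    specialize (HK y ltac:(rewrite Rabs_right; lra)).
    unfold ev in HK. simpl in HK. rewrite taylor0_1, taylor0_0 in HK. fold l in HK.
    rewrite (Rabs_right y) in HK by lra. apply abs_bnd in HK.
    assert (K * (y * (y * 1)) <= Rabs K * y * y).
    { assert (K <= Rabs K) by apply Rle_abs. assert (0 <= y * y) by nra. nra. }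
    assert (Rabs K * y * y <= - l / 2 * y) by nra.
    assert (h 0 < h y) by (apply Hinc; lra). nra.
  - rewrite H0 in HC. lra.
Qed.

Lemma flat_conj F h hinv : flatP F -> (forall y, 0 < y -> 0 < F y) ->
  (forall eps, 0 < eps -> exists y, 0 < y < eps /\ F y <> y) ->
  smooth h -> smooth hinv -> (forall x, hinv (h x) = x) -> (forall y, h (hinv y) = y) ->
  (forall x y, x < y -> h x < h y) -> h 0 = 0 -> (forall y, F (h y) = h (F y)) ->
  taylor0 h = fps_X.
Proof.
  intros FP Fpos C7 Sh Si Hi1 Hi2 Hinc Hh0 Hcom.
  assert (Hi0 : hinv 0 = 0) by (rewrite <- Hh0 at 1; apply Hi1).
  assert (Icom : forall y, F (hinv y) = hinv (F y)).
  { intros y. rewrite <- (Hi1 (F (hinv y))). rewrite <- Hcom. rewrite Hi2. reflexivity. }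
  assert (Iinc : forall x y, x < y -> hinv x < hinv y).
  { intros x y Hxy. destruct (Rlt_le_dec (hinv x) (hinv y)) as [H|H]; auto.
    destruct (Rle_lt_or_eq_dec _ _ H) as [H'|H'].
    - apply Hinc in H'. rewrite !Hi2 in H'. lra.
    - assert (h (hinv y) = h (hinv x)) by (rewrite H'; auto). rewrite !Hi2 in H0. lra. }
  assert (All : forall n j, (j <= n)%nat -> taylor0 h j = fps_X j).
  { induction n; intros j Hj.
    - assert (j = 0%nat) by lia. subst. rewrite taylor0_0, Hh0. reflexivity.
    - destruct (Nat.eq_dec j (S n)); [|apply IHn; lia]. subst j.
      destruct (Req_dec (taylor0 h (S n)) (fps_X (S n))) as [E|NE]; auto. exfalso.
      destruct n.
      +
        rewrite taylor0_1 in NE. unfold fps_X in NE. simpl in NE.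
        assert (Hl := deriv_pos h hinv Sh Si Hi1 Hinc).
        destruct (Rlt_le_dec (Derive h 0) 1) as [Hl1|Hl1].
        * apply (caseA F FP Fpos C7 h); auto.
        * assert (HC := chain_inv h hinv Sh Si Hi1). rewrite Hh0 in HC.
          apply (caseA F FP Fpos C7 hinv); auto. split.
          -- destruct (Rlt_le_dec 0 (Derive hinv 0)); auto. nra.
          -- assert (Derive h 0 > 1) by lra. nra.
      +
        set (p := S n). set (c := taylor0 h (S p)).
        assert (Hc : c <> 0) by (unfold c; unfold fps_X in NE; simpl in NE; auto).
        destruct (taylor h (S p) Sh) as [K1 HK1].
        destruct (taylor (Derive h) n (smooth_Derive h Sh)) as [K2 HK2].
        assert (T1 : forall y, 0 < y < 1 -> Rabs (h y - (y + c * y ^ S p)) <= K1 * y ^ S (S p)).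
        { intros y Hy. specialize (HK1 y ltac:(rewrite Rabs_right; lra)). rewrite (Rabs_right y) in HK1 by lra.
          rewrite ev_S in HK1. rewrite (ev_eq _ fps_X) in HK1 by (intros; apply IHn; lia).
          rewrite ev_X in HK1 by (unfold p; lia). fold c in HK1. auto. }
        assert (T2 : forall y, 0 <= y < 1 -> Rabs (Derive h y - 1) <= K2 * y ^ p).
        { intros y Hy. specialize (HK2 y ltac:(rewrite Rabs_right; lra)). rewrite (Rabs_right y) in HK2 by lra.
          rewrite (ev_eq _ fps_one) in HK2. rewrite ev_one in HK2. auto.
          intros k Hk. unfold taylor0. rewrite <- Derive_n_S. destruct k.
          - simpl. assert (E1 := IHn 1%nat ltac:(lia)). rewrite taylor0_1 in E1. unfold fps_X in E1. simpl in E1.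
            change (Derive (fun x : R => h x) 0) with (Derive h 0). rewrite E1. unfold fps_one. simpl. field.
          - assert (E1 := IHn (S (S k)) ltac:(lia)). unfold taylor0, fps_X in E1. simpl Nat.eqb in E1.
            assert (Derive_n h (S (S k)) 0 = 0).
            { apply Rmult_eq_reg_r with (/ INR (Factorial.fact (S (S k)))). unfold Rdiv in E1. rewrite E1. ring.
              apply Rinv_neq_0_compat, INR_fact_neq_0. }
            rewrite H. unfold fps_one. simpl. unfold Rdiv. ring. }
        destruct (Rlt_le_dec c 0) as [Hcn|Hcp].
        * apply (caseB F FP Fpos C7 h p c K1 K2 1); auto; try lra. all: try (unfold p; lia).
        * apply (caseC F FP Fpos C7 h hinv p c K1 K2 1); auto; try lra. all: try (unfold p; lia).
          all: try (destruct (Rle_lt_or_eq_dec _ _ Hcp); auto; congruence). }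
  apply functional_extensionality. intros n. apply (All n). lia.
Qed.

Lemma taylor0_eq_Derive a b : taylor0 a = taylor0 b -> forall n, Derive_n a n 0 = Derive_n b n 0.
Proof.
  intros E n. assert (H := f_equal (fun c => c n) E). simpl in H. unfold taylor0 in H.
  apply Rmult_eq_reg_r with (/ INR (Factorial.fact n)). exact H.
  apply Rinv_neq_0_compat, INR_fact_neq_0.
Qed.

Lemma dec_inv f finv : (forall x y, x < y -> f y < f x) -> (forall x, f (finv x) = x) ->
  forall x y, x < y -> finv y < finv x.
Proof.
  intros Hd Hi x y Hxy. destruct (Rlt_le_dec (finv y) (finv x)) as [H|H]; auto.
  destruct (Rle_lt_or_eq_dec _ _ H) as [H'|H'].
  - apply Hd in H'. rewrite !Hi in H'. lra.
  - assert (f (finv x) = f (finv y)) by (rewrite H'; auto). rewrite !Hi in H0. lra.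
Qed.

Lemma dec_fix g : (forall x y, x < y -> g y < g x) -> g 0 = 0 -> forall z, g z = z -> z = 0.
Proof.
  intros Hd Hg0 z Hz. destruct (Rtotal_order z 0) as [H|[H|H]]; auto.
  - pose proof (Hd _ _ H). exfalso; lra.
  - pose proof (Hd _ _ H). exfalso; lra.
Qed.

Theorem theorem4p3 (f g : R -> R) :
  diffeo_minus f -> diffeo_minus g ->
  f 0 = 0 -> g 0 = 0 ->
  (forall x, f (f x) = g (g x)) ->
  fps_comp (taylor0 f) (taylor0 f) = fps_X ->
  boundary_point (fun x => f (f x) = x) 0 ->
  ((exists h hinv : R -> R,
      is_diffeo_with h hinv /\ diffeo_plus h /\ (forall x, f x = hinv (g (h x))))
   <-> taylor0 f = taylor0 g).
Proof.
  intros [[finv [Sf [Sfi [Hf1 Hf2]]]] Hfd] [[ginv [Sg [Sgi [Hg1 Hg2]]]] Hgd] Hf0 Hg0 Hfg Hser Hbd.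
  assert (Hfi0 : finv 0 = 0) by (rewrite <- Hf0 at 1; apply Hf1).
  assert (Hgi0 : ginv 0 = 0) by (rewrite <- Hg0 at 1; apply Hg1).
  split.
  - intros [h [hinv [[Sh [Si [Hi1 Hi2]]] [[_ Hinc] Hconj]]]].
    set (F := fun x => f (f x)).
    assert (SF : smooth F) by (unfold F; apply smooth_comp; auto).
    assert (TF : taylor0 F = fps_X) by (unfold F; rewrite taylor0_comp; auto).
    assert (FP : flatP F).
    { intros N. destruct (taylor F (S N) SF) as [K HK]. exists (Rabs K), 1. split. lra.
      intros y Hy. specialize (HK y ltac:(rewrite Rabs_right; lra)). rewrite TF, ev_X in HK by lia.
      rewrite (Rabs_right y) in HK by lra. eapply Rle_trans. apply HK.
      apply Rle_trans with (Rabs K * y ^ S (S N)). apply Rmult_le_compat_r. apply pow_le; lra. apply Rle_abs.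
      apply Rmult_le_compat_l. apply Rabs_pos. change (y ^ S (S N)) with (y * y ^ S N).
      assert (0 <= y ^ S N) by (apply pow_le; lra). nra. }
    assert (Fpos : forall y, 0 < y -> 0 < F y).
    { intros y Hy. unfold F. assert (f y < f 0) by (apply Hfd; auto). rewrite Hf0 in H.
      assert (f 0 < f (f y)) by (apply Hfd; auto). lra. }
    assert (C7 : forall eps, 0 < eps -> exists y, 0 < y < eps /\ F y <> y).
    { intros eps Heps. destruct (taylor f 0 Sf) as [Kf HKf].
      assert (HKa : 0 <= Rabs Kf) by apply Rabs_pos.
      set (e' := Rmin eps (Rmin 1 (eps / (Rabs Kf + 1)))).
      assert (He' : 0 < e') by (unfold e'; repeat apply Rmin_pos; try lra; apply Rdiv_lt_0_compat; lra).
      destruct (proj2 Hbd e' He') as [y [Hy Hny]]. rewrite Rminus_0_r in Hy.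
      assert (Hye : Rabs y < eps) by (eapply Rlt_le_trans; [apply Hy| apply Rmin_l]).
      assert (Hy1 : Rabs y < 1) by (eapply Rlt_le_trans; [apply Hy| eapply Rle_trans; [apply Rmin_r| apply Rmin_l]]).
      assert (Hy2 : Rabs y < eps / (Rabs Kf + 1)) by (eapply Rlt_le_trans; [apply Hy| eapply Rle_trans; [apply Rmin_r| apply Rmin_r]]).
      destruct (Rtotal_order y 0) as [Hn|[H0|Hp]].
      + exists (f y). assert (Hz : 0 < f y) by (rewrite <- Hf0; apply Hfd; auto).
        split. split. auto.
        * specialize (HKf y ltac:(lra)). rewrite ev_O, taylor0_0, Hf0, Rminus_0_r in HKf. simpl in HKf.
          rewrite Rmult_1_r in HKf. apply Rle_lt_trans with (Rabs Kf * Rabs y).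
          { eapply Rle_trans. 2: apply Rmult_le_compat_r; [apply Rabs_pos| apply Rle_abs]. rewrite <- (Rabs_right (f y)) by lra. auto. }
          apply Rle_lt_trans with ((Rabs Kf + 1) * Rabs y). assert (0 <= Rabs y) by apply Rabs_pos. nra.
          apply Rmult_lt_reg_r with (/ (Rabs Kf + 1)). apply Rinv_0_lt_compat; lra.
          replace ((Rabs Kf + 1) * Rabs y * / (Rabs Kf + 1)) with (Rabs y) by (field; lra). auto.
        * unfold F in *. intros E. apply Hny. apply (f_equal finv) in E. rewrite !Hf1 in E. auto.
      + subst y. unfold F in Hny. rewrite Hf0, Hf0 in Hny. lra.
      + exists y. split; [split|]; auto. rewrite Rabs_right in Hye; lra. }
    assert (Hh0 : h 0 = 0).
    { apply (dec_fix g Hgd Hg0). specialize (Hconj 0). rewrite Hf0 in Hconj.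
      apply (f_equal h) in Hconj. rewrite Hi2 in Hconj. auto. }
    assert (Hhf : forall x, h (f x) = g (h x)) by (intros; rewrite Hconj, Hi2; auto).
    assert (Hcom : forall y, F (h y) = h (F y)).
    { intros y. unfold F. rewrite Hfg, !Hhf. reflexivity. }
    assert (Th : taylor0 h = fps_X) by (apply (flat_conj F h hinv); auto).
    assert (Hi0 : hinv 0 = 0) by (rewrite <- Hh0 at 1; apply Hi1).
    assert (Ti : taylor0 hinv = fps_X).
    { assert (E := taylor0_comp h hinv Sh Si Hi0). rewrite Th in E.
      rewrite comp_X_left in E by (rewrite taylor0_0; auto).
      rewrite <- E. rewrite (taylor0_ext _ (fun x => x)) by auto. apply taylor0_id. }
    assert (Eg : forall x, g x = h (f (hinv x))) by (intros; rewrite Hhf, Hi2; auto).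
    rewrite (taylor0_ext g _ Eg).
    rewrite (taylor0_comp h (fun x => f (hinv x))); auto. 2: apply smooth_comp; auto.
    2: rewrite Hi0; auto.
    rewrite Th. rewrite comp_X_left. 2: rewrite taylor0_0, Hi0; auto.
    rewrite (taylor0_comp f hinv); auto. rewrite Ti, comp_X_right. reflexivity.
  - intros ET.
    assert (Tgf : taylor0 (fun x => ginv (f x)) = taylor0 (fun x => x)).
    { rewrite taylor0_comp; auto. rewrite ET. rewrite <- taylor0_comp; auto.
      apply taylor0_ext; auto. }
    assert (Tfg : taylor0 (fun x => finv (g x)) = taylor0 (fun x => x)).
    { rewrite taylor0_comp; auto. rewrite <- ET. rewrite <- taylor0_comp; auto.
      apply taylor0_ext; auto. }
    set (h := glue (fun x => ginv (f x)) (fun x => x)).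
    set (hinv := glue (fun x => finv (g x)) (fun x => x)).
    assert (Sh : smooth h).
    { apply glue_smooth. apply smooth_comp; auto. apply smooth_id. apply taylor0_eq_Derive; auto. }
    assert (Si : smooth hinv).
    { apply glue_smooth. apply smooth_comp; auto. apply smooth_id. apply taylor0_eq_Derive; auto. }
    assert (Hfid := dec_inv f finv Hfd Hf2). assert (Hgid := dec_inv g ginv Hgd Hg2).
    assert (Hi1 : forall x, hinv (h x) = x).
    { intros x. unfold h, hinv. destruct (Rle_lt_dec 0 x).
      - rewrite (glue_pos _ _ x) by auto. rewrite glue_pos by auto. auto.
      - rewrite (glue_neg _ _ x) by auto.
        assert (0 < f x) by (rewrite <- Hf0; apply Hfd; auto).
        assert (ginv (f x) < 0) by (rewrite <- Hgi0; apply Hgid; auto).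
        rewrite glue_neg by auto. rewrite Hg2, Hf1. auto. }
    assert (Hi2 : forall x, h (hinv x) = x).
    { intros x. unfold h, hinv. destruct (Rle_lt_dec 0 x).
      - rewrite (glue_pos _ _ x) by auto. rewrite glue_pos by auto. auto.
      - rewrite (glue_neg _ _ x) by auto.
        assert (0 < g x) by (rewrite <- Hg0; apply Hgd; auto).
        assert (finv (g x) < 0) by (rewrite <- Hfi0; apply Hfid; auto).
        rewrite glue_neg by auto. rewrite Hf2, Hg1. auto. }
    exists h, hinv. split; [|split].
    + repeat split; auto.
    + split. exists hinv. repeat split; auto.
      intros x y Hxy. unfold h. destruct (Rle_lt_dec 0 x).
      * rewrite !glue_pos by lra. auto.
      * rewrite (glue_neg _ _ x) by auto. destruct (Rle_lt_dec 0 y).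
        -- rewrite (glue_pos _ _ y) by auto. assert (0 < f x) by (rewrite <- Hf0; apply Hfd; auto).
           assert (ginv (f x) < 0) by (rewrite <- Hgi0; apply Hgid; auto). lra.
        -- rewrite (glue_neg _ _ y) by auto. apply Hgid. apply Hfd. auto.
    + intros x. unfold h, hinv. destruct (Rle_lt_dec 0 x).
      * rewrite (glue_pos _ _ x) by auto. destruct (Rle_lt_or_eq_dec _ _ r) as [Hx|Hx].
        -- assert (g x < 0) by (rewrite <- Hg0; apply Hgd; auto).
           rewrite glue_neg by auto. rewrite <- Hfg. rewrite Hf1. auto.
        -- subst x. rewrite Hg0, glue_pos by lra. auto.
      * rewrite (glue_neg _ _ x) by auto. rewrite Hg2.
        assert (0 < f x) by (rewrite <- Hf0; apply Hfd; auto).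
        rewrite glue_pos by lra. auto.
Qed.
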